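(* Let $\dot{\mathcal H}$ be the point (bound-state) subspace of the Hydrogen atom Hamiltonian and $\dot H$ the restriction of the Hamiltonian to it, as described in the context. There exists a generic set $\mathcal R\subset\dot{\mathcal H}$ such that for each $|\psi\rangle\in\mathcal R$ and each $0<q<1$, \[D^-_{\mu_{|\psi\rangle}}(q)=0\qquad\text{and}\qquad D^+_{\mu_{|\psi\rangle}}(q)=\tfrac13 .\]
   Context: The Hydrogen atom Hamiltonian is $H=-\Delta-\kappa/|x|$ acting in $\mathrm{L}^2(\mathbb R^3)$, $\kappa>0$ (the unique self-adjoint extension from $C_c^\infty$). Its eigenvalues are $\lambda_n=-\Lambda/n^2$, $n=1,2,\dots$, with $\Lambda=\kappa^2/4$, each of multiplicity $n^2$, with orthonormal eigenfunctions $|n,l,m\rangle$, $l=0,\dots,n-1$, $m=-l,\dots,l$. $\dot{\mathcal H}$ denotes the closed subspace spanned by all $|n,l,m\rangle$, and $\dot H$ the restriction of $H$ to $\dot{\mathcal H}$, so $\dot H\sum a_{n,l,m}|n,l,m\rangle=\sum \lambda_n a_{n,l,m}|n,l,m\rangle$. For $|\psi\rangle=\sum a_{n,l,m}|n,l,m\rangle\in\dot{\mathcal H}$ its spectral measure is $\mu_{|\psi\rangle}=\sum_{n,l,m}|a_{n,l,m}|^2\delta_{\lambda_n}$. For a finite positive Borel measure $\mu$ on $\mathbb R$ and $q>0$, $q\neq1$, set $I_\mu(q,\epsilon)=\int_{\{x:\mu(B(x,\epsilon))>0\}}\mu(B(x,\epsilon))^{q-1}\,d\mu(x)$ with $B(x,\epsilon)=(x-\epsilon,x+\epsilon)$,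 and define the lower and upper generalized fractal dimensions $D^-_\mu(q)=\liminf_{\epsilon\downarrow0}\frac{\ln I_\mu(q,\epsilon)}{(q-1)\ln\epsilon}$, $D^+_\mu(q)=\limsup_{\epsilon\downarrow0}\frac{\ln I_\mu(q,\epsilon)}{(q-1)\ln\epsilon}$. A generic set in a complete metric space is a countable intersection of open dense sets. *)

(* Defs.v *)
From Stdlib Require Import Reals.
From Coquelicot Require Import Coquelicot.
Open Scope R_scope.

(* A vector of the point subspace \dot H is given by its coordinates
   a_{n,l,m} in the orthonormal eigenbasis |n,l,m>.  We store the coordinate
   of |n,l,m> at  v n l j  with  j = m + l  (so 0 <= j <= 2l). *)
Definition vec := nat -> nat -> nat -> C.

Definition valid_index (n l j : nat) : Prop := (1 <= n)%nat /\ (l < n)%nat /\ (j <= 2 * l)%nat.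

(* squared norm of the component of v in the eigenspace of lambda_{k+1}
   = sum_{l=0}^{k} sum_{m=-l}^{l} |a_{k+1,l,m}|^2 *)
Definition block (v : vec) (k : nat) : R :=
  sum_n (fun l => sum_n (fun j => Cmod (v (S k) l j) ^ 2) (2 * l)) k.

Definition inH (v : vec) : Prop :=
  (forall n l j, ~ valid_index n l j -> v n l j = 0%C) /\ ex_series (block v).

Definition distH (v w : vec) : R :=
  sqrt (Series (block (fun n l j => Cminus (v n l j) (w n l j)))).

Definition openH (U : vec -> Prop) : Prop :=
  (forall v, U v -> inH v) /\
  forall v, U v -> exists eps, 0 < eps /\ forall w, inH w -> distH v w < eps -> U w.

Definition denseH (U : vec -> Prop) : Prop :=
  forall v, inH v -> forall eps, 0 < eps -> exists w, U w /\ distH v w < eps.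

Definition genericH (S : vec -> Prop) : Prop :=
  exists U : nat -> vec -> Prop,
    (forall k, openH (U k) /\ denseH (U k)) /\
    forall v, S v <-> (inH v /\ forall k, U k v).

Definition lambda (kappa : R) (n : nat) : R := - (kappa ^ 2 / 4) / (INR n ^ 2).

(* spectral measure mu_psi = sum_{n,l,m} |a_{n,l,m}|^2 delta_{lambda_n};
   the mass at lambda_{k+1} is  block psi k. *)
Definition mu_ball (kappa : R) (psi : vec) (x eps : R) : R :=
  Series (fun k => if Rlt_dec (Rabs (lambda kappa (S k) - x)) eps then block psi k else 0).

(* I_mu(q,eps) = \int_{ {x : mu(B(x,eps)) > 0} } mu(B(x,eps))^(q-1) dmu(x),
   written out for the atomic measure mu_psi = sum_k (block psi k) delta_{lambda_{k+1}} *)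
Definition I_mu (kappa : R) (psi : vec) (q eps : R) : R :=
  Series (fun k =>
    block psi k *
    (if Rlt_dec 0 (mu_ball kappa psi (lambda kappa (S k)) eps)
     then Rpower (mu_ball kappa psi (lambda kappa (S k)) eps) (q - 1)
     else 0)).

Definition liminf0 (f : R -> R) : Rbar :=
  Rbar_lub (fun y => exists delta, 0 < delta /\
     y = Rbar_glb (fun z => exists eps, 0 < eps < delta /\ z = Finite (f eps))).
Definition limsup0 (f : R -> R) : Rbar :=
  Rbar_glb (fun y => exists delta, 0 < delta /\
     y = Rbar_lub (fun z => exists eps, 0 < eps < delta /\ z = Finite (f eps))).

Definition gfd_lower (kappa : R) (psi : vec) (q : R) : Rbar :=
  liminf0 (fun eps => ln (I_mu kappa psi q eps) / ((q - 1) * ln eps)).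
Definition gfd_upper (kappa : R) (psi : vec) (q : R) : Rbar :=
  limsup0 (fun eps => ln (I_mu kappa psi q eps) / ((q - 1) * ln eps)).

(* Main.v *)
Require Import Defs.
From Stdlib Require Import Reals Lra Lia Psatz ZArith.
From Coquelicot Require Import Coquelicot.
Open Scope R_scope.

Lemma sumn_le (a b : nat -> R) n : (forall k, a k <= b k) -> sum_n a n <= sum_n b n.
Proof. intros H; unfold sum_n; apply sum_n_m_le; auto. Qed.

Lemma sum_n_ge0 (a : nat -> R) n : (forall k, 0 <= a k) -> 0 <= sum_n a n.
Proof.
  intros H; induction n. rewrite sum_O; auto.
  rewrite sum_Sn; unfold plus; simpl; specialize (H (S n)); lra.
Qed.

Lemma sum_n_incr (a : nat -> R) n : (forall k, 0 <= a k) -> sum_n a n <= sum_n a (S n).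
Proof. intros H; rewrite sum_Sn; unfold plus; simpl; specialize (H (S n)); lra. Qed.

Lemma sum_n_mono (a : nat -> R) n m : (forall k, 0 <= a k) -> (n <= m)%nat -> sum_n a n <= sum_n a m.
Proof.
  intros H Hnm; induction Hnm. lra. eapply Rle_trans; [apply IHHnm|apply sum_n_incr; auto].
Qed.

Lemma term_le_sum (a : nat -> R) k n : (forall i, 0 <= a i) -> (k <= n)%nat -> a k <= sum_n a n.
Proof.
  intros H Hk. induction Hk.
  - destruct k. rewrite sum_O; lra. rewrite sum_Sn; unfold plus; simpl.
    pose proof (sum_n_ge0 a k H); lra.
  - eapply Rle_trans; [apply IHHk| apply sum_n_incr; auto].
Qed.

Lemma sumn_plus (a b : nat -> R) n : sum_n (fun k => a k + b k) n = sum_n a n + sum_n b n.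
Proof. apply (sum_n_plus a b n). Qed.

Lemma sumn_scal_l (c : R) (a : nat -> R) n : sum_n (fun k => c * a k) n = c * sum_n a n.
Proof. apply (sum_n_mult_l c a n). Qed.

Lemma sumn_scal_r (c : R) (a : nat -> R) n : sum_n (fun k => a k * c) n = sum_n a n * c.
Proof. apply (sum_n_mult_r c a n). Qed.

Lemma series_bound (a : nat -> R) M : (forall k, 0 <= a k) -> (forall n, sum_n a n <= M) ->
  ex_series a /\ Series a <= M.
Proof.
  intros H0 HM.
  assert (Hex : ex_finite_lim_seq (sum_n a)).
  { apply ex_finite_lim_seq_incr with M; auto. intros; apply sum_n_incr; auto. }
  destruct Hex as [l Hl].
  assert (His : is_series a l) by exact Hl.
  split. exists l; auto.
  rewrite (is_series_unique a l His).
  assert (Rbar_le l M). { eapply is_lim_seq_le; [| exact Hl | apply is_lim_seq_const]. auto. }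
  exact H.
Qed.

Lemma sum_le_series (a : nat -> R) n : (forall k, 0 <= a k) -> ex_series a -> sum_n a n <= Series a.
Proof.
  intros H0 [l Hl]. rewrite (is_series_unique a l Hl).
  assert (Rbar_le (sum_n a n) l).
  { apply is_lim_seq_le_loc with (u := fun _ => sum_n a n) (v := sum_n a).
    exists n; intros m Hm; apply sum_n_mono; auto.
    apply is_lim_seq_const. exact Hl. }
  exact H.
Qed.

Lemma term_le_series (a : nat -> R) k : (forall i, 0 <= a i) -> ex_series a -> a k <= Series a.
Proof. intros; eapply Rle_trans; [apply (term_le_sum a k k)|apply sum_le_series]; auto. Qed.

Lemma series_ge0 (a : nat -> R) : (forall i, 0 <= a i) -> 0 <= Series a.
Proof.
  intros H. destruct (Classical_Prop.classic (ex_series a)) as [He|He].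
  - eapply Rle_trans; [apply (H O)| apply term_le_series; auto].
  - unfold Series. replace (Lim_seq (sum_n a)) with (Lim_seq (sum_n a)) by auto.
    destruct (ex_lim_seq_incr (sum_n a)) as [l Hl]. intros; apply sum_n_incr; auto.
    rewrite (is_lim_seq_unique _ _ Hl).
    destruct l as [l| |]; simpl.
    + exfalso; apply He; exists l; exact Hl.
    + lra.
    + exfalso. assert (Rbar_le (sum_n a 0) m_infty).
      eapply is_lim_seq_le_loc with (u := fun _ => sum_n a 0) (v := sum_n a).
      exists O; intros; apply sum_n_mono; auto; lia. apply is_lim_seq_const. exact Hl. exact H0.
Qed.

Lemma series_le_gen (a b : nat -> R) : (forall k, 0 <= a k <= b k) -> ex_series b ->
  ex_series a /\ Series a <= Series b.
Proof.
  intros H Hb. split.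
  - apply (ex_series_le a b); auto. intros n; rewrite Rabs_pos_eq; apply H.
  - apply Series_le; auto.
Qed.

Lemma series_shift_le (a : nat -> R) K : (forall k, 0 <= a k) -> ex_series a ->
  Series (fun k => a (K + k)%nat) <= Series a.
Proof.
  intros H He. destruct K. simpl. apply Rle_refl.
  rewrite (Series_incr_n a (S K)); try lia; auto.
  pose proof (sum_n_ge0 a K H). rewrite sum_n_Reals in H0. simpl pred. lra.
Qed.

Lemma ex_series_cmul (c : R) (a : nat -> R) : ex_series a -> ex_series (fun n => c * a n).
Proof.
  intros H. apply ex_series_ext with (fun n => a n * c). intros; apply Rmult_comm.
  apply ex_series_scal_r; auto.
Qed.

Lemma ex_series_add (a b : nat -> R) : ex_series a -> ex_series b -> ex_series (fun n => a n + b n).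
Proof. intros; apply (ex_series_plus a b); auto. Qed.

Definition diffv (v w : vec) : vec := fun n l j => Cminus (v n l j) (w n l j).
Definition tail (v : vec) (K : nat) : R := Series (fun k => block v (K + k)).
Definition Tot (v : vec) : R := Series (block v).

Lemma block_ge0 v k : 0 <= block v k.
Proof.
  unfold block. apply sum_n_ge0; intros l. apply sum_n_ge0; intros j.
  pose proof (Cmod_ge_0 (v (S k) l j)). nra.
Qed.

Lemma sq_ineq x y t : 0 < t -> 0 <= x -> 0 <= y -> (x + y)^2 <= (1+t) * x^2 + (1 + /t) * y^2.
Proof.
  intros Ht Hx Hy. assert (Hu : t * /t = 1) by (field; lra).
  assert (0 < /t) by (apply Rinv_0_lt_compat; lra).
  assert (2*x*y <= t*x^2 + /t * y^2).
  { assert (0 <= /t * (t*x - y)^2) by (apply Rmult_le_pos; [lra | apply pow2_ge_0]).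
    assert (E: /t * (t*x - y)^2 = t * (t * /t) * x^2 - 2 * (t * /t) * x * y + /t * y^2) by ring.
    rewrite E, Hu in H0. lra. }
  nra.
Qed.

Lemma cmod_ineq1 (v w : C) t : 0 < t ->
  Cmod w ^ 2 <= (1+t) * Cmod v ^2 + (1 + /t) * Cmod (Cminus v w) ^ 2.
Proof.
  intros Ht.
  assert (Cmod w <= Cmod v + Cmod (Cminus v w)).
  { replace w with (v + - (Cminus v w))%C at 1 by (unfold Cminus; ring).
    eapply Rle_trans. apply Cmod_triangle. rewrite Cmod_opp. lra. }
  pose proof (Cmod_ge_0 w). pose proof (Cmod_ge_0 v). pose proof (Cmod_ge_0 (Cminus v w)).
  eapply Rle_trans; [|apply sq_ineq; auto]. nra.
Qed.

Lemma cmod_ineq2 (v w : C) t : 0 < t ->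
  Cmod v ^ 2 <= (1+t) * Cmod w ^2 + (1 + /t) * Cmod (Cminus v w) ^ 2.
Proof.
  intros Ht.
  assert (Cmod v <= Cmod w + Cmod (Cminus v w)).
  { replace v with (w + (Cminus v w))%C at 1 by (unfold Cminus; ring).
    apply Cmod_triangle. }
  pose proof (Cmod_ge_0 w). pose proof (Cmod_ge_0 v). pose proof (Cmod_ge_0 (Cminus v w)).
  eapply Rle_trans; [|apply sq_ineq; auto]. nra.
Qed.

Lemma cmod_ineq3 (v w : C) : Cmod (Cminus v w) ^ 2 <= 2 * Cmod v ^ 2 + 2 * Cmod w ^ 2.
Proof.
  assert (Cmod (Cminus v w) <= Cmod v + Cmod w).
  { unfold Cminus. eapply Rle_trans. apply Cmod_triangle. rewrite Cmod_opp. lra. }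
  pose proof (Cmod_ge_0 w). pose proof (Cmod_ge_0 v). pose proof (Cmod_ge_0 (Cminus v w)).
  apply Rle_trans with ((Cmod v + Cmod w)^2). apply pow_incr; lra.
  set (x := Cmod v) in *. set (y := Cmod w) in *. pose proof (pow2_ge_0 (x - y)). nra.
Qed.

Lemma block_lin_le (v w z : vec) (a b : R) k :
  (forall l j, Cmod (z (S k) l j) ^ 2 <= a * Cmod (v (S k) l j) ^ 2 + b * Cmod (w (S k) l j) ^ 2) ->
  block z k <= a * block v k + b * block w k.
Proof.
  intros H. unfold block. rewrite <- sumn_scal_l, <- sumn_scal_l, <- sumn_plus.
  apply sumn_le; intros l. rewrite <- sumn_scal_l, <- sumn_scal_l, <- sumn_plus.
  apply sumn_le; intros j. apply H.
Qed.

Lemma block_ineq1 v w t k : 0 < t ->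
  block w k <= (1+t) * block v k + (1 + /t) * block (diffv v w) k.
Proof. intros; apply block_lin_le; intros; apply cmod_ineq1; auto. Qed.

Lemma block_ineq2 v w t k : 0 < t ->
  block v k <= (1+t) * block w k + (1 + /t) * block (diffv v w) k.
Proof. intros; apply block_lin_le; intros; apply cmod_ineq2; auto. Qed.

Lemma block_ineq3 v w k : block (diffv v w) k <= 2 * block v k + 2 * block w k.
Proof. intros; apply block_lin_le; intros; apply cmod_ineq3; auto. Qed.

Lemma ex_block_diff v w : inH v -> inH w -> ex_series (block (diffv v w)).
Proof.
  intros [_ Hv] [_ Hw].
  apply (series_le_gen _ (fun k => 2 * block v k + 2 * block w k)).
  intros; split. apply block_ge0. apply block_ineq3.
  apply ex_series_add; apply ex_series_cmul; auto.
Qed.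

Lemma ex_tail v K : inH v -> ex_series (fun k => block v (K + k)).
Proof. intros [_ H]. apply ex_series_incr_n; auto. Qed.

Lemma tail_ge0 v K : 0 <= tail v K.
Proof. apply series_ge0; intros; apply block_ge0. Qed.

Lemma tail_le_Tot v K : inH v -> tail v K <= Tot v.
Proof. intros [_ H]. apply series_shift_le; auto. intros; apply block_ge0. Qed.

Lemma block_le_tail v K k : inH v -> (K <= k)%nat -> block v k <= tail v K.
Proof.
  intros Hv Hk. unfold tail. replace k with (K + (k - K))%nat at 1 by lia.
  apply (term_le_series (fun i => block v (K + i))). intros; apply block_ge0. apply ex_tail; auto.
Qed.

Lemma block_le_Tot v k : inH v -> block v k <= Tot v.
Proof. intros Hv. apply (block_le_tail v 0 k Hv). lia. Qed.

Lemma Tot_ge0 v : 0 <= Tot v.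
Proof. apply series_ge0; intros; apply block_ge0. Qed.

Lemma tail_ineq v w t K : inH v -> inH w -> 0 < t ->
  tail w K <= (1+t) * tail v K + (1 + /t) * Series (block (diffv v w)).
Proof.
  intros Hv Hw Ht. unfold tail.
  assert (Hd := ex_block_diff v w Hv Hw).
  assert (Hd' : ex_series (fun k => block (diffv v w) (K + k))) by (apply ex_series_incr_n; auto).
  assert (Hv' := ex_tail v K Hv).
  assert (0 < /t) by (apply Rinv_0_lt_compat; lra).
  eapply Rle_trans.
  apply (Series_le _ (fun k => (1+t) * block v (K+k) + (1 + /t) * block (diffv v w) (K+k))).
  intros; split. apply block_ge0. apply block_ineq1; auto.
  apply ex_series_add; apply ex_series_cmul; auto.
  rewrite Series_plus. rewrite Series_scal_l, Series_scal_l.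
  pose proof (series_shift_le (block (diffv v w)) K (block_ge0 _) Hd).
  apply Rplus_le_compat_l. apply Rmult_le_compat_l; lra.
  apply ex_series_cmul; auto.
  apply ex_series_cmul; auto.
Qed.

Lemma dist_small v w eta : 0 < eta -> distH v w < sqrt eta -> Series (block (diffv v w)) < eta.
Proof.
  intros He Hd. unfold distH in Hd. apply sqrt_lt_0_alt. exact Hd.
Qed.

Lemma usc_tail v sig : inH v -> 0 < sig -> exists eta, 0 < eta /\
  forall w, inH w -> distH v w < eta -> forall K, tail w K < tail v K + sig.
Proof.
  intros Hv Hs. pose proof (Tot_ge0 v). remember (Tot v) as T eqn:HT.
  set (t := sig / (2 * (T + 1))).
  assert (Ht : 0 < t) by (unfold t; apply Rdiv_lt_0_compat; lra).
  assert (0 < /t) by (apply Rinv_0_lt_compat; lra).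
  set (c := sig / (2 * (1 + /t))).
  assert (Hc : 0 < c) by (unfold c; apply Rdiv_lt_0_compat; lra).
  exists (sqrt c). split. apply sqrt_lt_R0; auto.
  intros w Hw Hd K.
  pose proof (dist_small v w c Hc Hd) as HD.
  pose proof (tail_ineq v w t K Hv Hw Ht).
  pose proof (tail_le_Tot v K Hv). pose proof (tail_ge0 v K). rewrite <- HT in *.
  assert (t * T < sig / 2).
  { unfold t. apply Rmult_lt_reg_r with (2 * (T+1)). lra.
    field_simplify; try lra. }
  assert ((1 + /t) * Series (block (diffv v w)) < sig / 2).
  { apply Rmult_lt_reg_r with (/ (1 + /t)). apply Rinv_0_lt_compat; lra.
    replace ((1 + / t) * Series (block (diffv v w)) * / (1 + / t)) with (Series (block (diffv v w))) by (field; lra).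
    unfold c in HD. replace (sig / 2 * / (1 + / t)) with (sig / (2 * (1 + / t))) by (field; lra). lra. }
  assert (t * tail v K <= t * T) by (apply Rmult_le_compat_l; lra).
  clearbody t c. lra.
Qed.

Lemma lsc_block v sig : inH v -> 0 < sig -> exists eta, 0 < eta /\
  forall w, inH w -> distH v w < eta -> forall k, block v k - sig < block w k.
Proof.
  intros Hv Hs. pose proof (Tot_ge0 v). remember (Tot v) as T eqn:HT.
  set (t := sig / (2 * (T + 1))).
  assert (Ht : 0 < t) by (unfold t; apply Rdiv_lt_0_compat; lra).
  assert (0 < /t) by (apply Rinv_0_lt_compat; lra).
  set (c := sig / (2 * (1 + /t))).
  assert (Hc : 0 < c) by (unfold c; apply Rdiv_lt_0_compat; lra).
  exists (sqrt c). split. apply sqrt_lt_R0; auto.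
  intros w Hw Hd k.
  pose proof (dist_small v w c Hc Hd) as HD.
  pose proof (block_ineq2 v w t k Ht).
  pose proof (block_le_Tot v k Hv). pose proof (block_ge0 v k). pose proof (block_ge0 w k). rewrite <- HT in *.
  assert (t * T < sig / 2).
  { unfold t. apply Rmult_lt_reg_r with (2 * (T+1)). lra.
    field_simplify; try lra. }
  assert ((1 + /t) * block (diffv v w) k < sig / 2).
  { apply Rmult_lt_reg_r with (/ (1 + /t)). apply Rinv_0_lt_compat; lra.
    replace ((1 + / t) * block (diffv v w) k * / (1 + / t)) with (block (diffv v w) k) by (field; lra).
    pose proof (term_le_series (block (diffv v w)) k (block_ge0 _) (ex_block_diff v w Hv Hw)).
    unfold c in HD. replace (sig / 2 * / (1 + / t)) with (sig / (2 * (1 + / t))) by (field; lra). lra. }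
  assert (t * block v k <= t * T) by (apply Rmult_le_compat_l; lra).
  clearbody t c.
  assert ((block v k - sig) * (1 + t) < block w k * (1 + t)) by nra.
  apply Rmult_lt_reg_r with (1 + t); lra.
Qed.

Lemma spike_sum (c : R) k n : sum_n (fun j => if Nat.eqb j k then c else 0) n = if Nat.leb k n then c else 0.
Proof.
  induction n.
  - rewrite sum_O. destruct k; simpl; auto.
  - rewrite sum_Sn, IHn.
    destruct (Nat.eqb_spec (S n) k); destruct (Nat.leb_spec k n); destruct (Nat.leb_spec k (S n)); try lia;
    unfold plus; simpl; lra.
Qed.
Lemma spike_series (c : R) k : Series (fun j => if Nat.eqb j k then c else 0) = c.
Proof.
  apply is_series_unique.
  assert (is_lim_seq (sum_n (fun j => if Nat.eqb j k then c else 0)) c).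
  apply (is_lim_seq_ext_loc (fun _ => c)). exists k. intros n Hn. rewrite spike_sum.
  destruct (Nat.leb_spec k n); try lia; auto.
  apply is_lim_seq_const. exact H.
Qed.

Lemma exp_mono_le a b : a <= b -> exp a <= exp b.
Proof. intros H; destruct (Req_dec a b). subst; lra. left; apply exp_increasing; lra. Qed.

Lemma floor_ex x : 0 <= x -> exists n : nat, INR n <= x < INR n + 1.
Proof.
  intros Hx. destruct (archimed x) as [H1 H2].
  assert (Hz : (0 <= up x - 1)%Z).
  { assert (0 < IZR (up x)) by lra. apply lt_IZR in H. lia. }
  exists (Z.to_nat (up x - 1)). rewrite INR_IZR_INZ, Z2Nat.id by auto.
  rewrite minus_IZR. simpl. lra.
Qed.

Section MU.
Variable kappa : R.
Variable psi : vec.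
Variable eps q : R.
Hypothesis Hpsi : inH psi.
Hypothesis Heps : 0 < eps.
Hypothesis Hq : q < 1.

Definition mterm (k j : nat) : R :=
  if Rlt_dec (Rabs (lambda kappa (S j) - lambda kappa (S k))) eps then block psi j else 0.
Definition mk (k : nat) : R := mu_ball kappa psi (lambda kappa (S k)) eps.
Definition gk (k : nat) : R :=
  block psi k * (if Rlt_dec 0 (mk k) then Rpower (mk k) (q - 1) else 0).

Lemma mk_eq k : mk k = Series (mterm k).
Proof. reflexivity. Qed.

Lemma I_eq : I_mu kappa psi q eps = Series gk.
Proof. reflexivity. Qed.

Lemma mterm_bnd k j : 0 <= mterm k j <= block psi j.
Proof. unfold mterm; destruct Rlt_dec; pose proof (block_ge0 psi j); lra. Qed.

Lemma ex_mterm k : ex_series (mterm k).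
Proof. destruct Hpsi as [_ H]. apply (series_le_gen _ (block psi)); auto. apply mterm_bnd. Qed.

Lemma mk_ge0 k : 0 <= mk k.
Proof. rewrite mk_eq; apply series_ge0; intros; apply mterm_bnd. Qed.

Lemma mk_le_Tot k : mk k <= Tot psi.
Proof. rewrite mk_eq. destruct Hpsi as [_ H]. apply Series_le; auto. apply mterm_bnd. Qed.

Lemma mk_ge_sub k (P : nat -> bool) :
  (forall j, P j = true -> Rabs (lambda kappa (S j) - lambda kappa (S k)) < eps) ->
  Series (fun j => if P j then block psi j else 0) <= mk k.
Proof.
  intros HP. rewrite mk_eq. apply Series_le. 2: apply ex_mterm.
  intros j. destruct (P j) eqn:E.
  - unfold mterm. destruct Rlt_dec. pose proof (block_ge0 psi j); lra. exfalso; apply n; auto.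
  - split. lra. apply mterm_bnd.
Qed.

Lemma block_le_mk k : block psi k <= mk k.
Proof.
  eapply Rle_trans; [| apply (mk_ge_sub k (fun j => Nat.eqb j k))].
  - apply Req_le. rewrite <- (spike_series (block psi k) k) at 1.
    apply Series_ext. intros j. destruct (Nat.eqb_spec j k); subst; auto.
  - intros j Hj. apply Nat.eqb_eq in Hj. subst. unfold Rminus. rewrite Rplus_opp_r, Rabs_R0. auto.
Qed.

Lemma mk_le_block k : (forall j, j <> k -> eps <= Rabs (lambda kappa (S j) - lambda kappa (S k))) ->
  mk k <= block psi k.
Proof.
  intros H. rewrite mk_eq. rewrite <- (spike_series (block psi k) k).
  apply Series_le. intros j. split. apply mterm_bnd.
  unfold mterm. destruct (Nat.eqb_spec j k). subst. destruct Rlt_dec; pose proof (block_ge0 psi k); lra.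
  destruct Rlt_dec. specialize (H j n). lra. lra.
  apply (ex_series_ext (fun j => if Nat.eqb j k then block psi k else 0)). intros; auto.
  exists (block psi k). 
  assert (is_lim_seq (sum_n (fun j => if Nat.eqb j k then block psi k else 0)) (block psi k)).
  apply (is_lim_seq_ext_loc (fun _ => block psi k)). exists k. intros n Hn. rewrite spike_sum.
  destruct (Nat.leb_spec k n); try lia; auto.
  apply is_lim_seq_const. exact H0.
Qed.

Lemma tail_series K : Series (fun j => if Nat.leb K j then block psi j else 0) = tail psi K.
Proof.
  rewrite (Series_incr_n_aux _ K). unfold tail. apply Series_ext. intros j.
  destruct (Nat.leb_spec K (K + j)); auto; lia.
  intros j Hj. destruct (Nat.leb_spec K j); auto; lia.
Qed.

Lemma gk_ge0 k : 0 <= gk k.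
Proof.
  unfold gk. apply Rmult_le_pos. apply block_ge0. destruct Rlt_dec. unfold Rpower; left; apply exp_pos. lra.
Qed.

Lemma gk_pos_eq k : 0 < block psi k -> gk k = exp (ln (block psi k) + (q - 1) * ln (mk k)).
Proof.
  intros Hb. pose proof (block_le_mk k). unfold gk. destruct Rlt_dec; [|lra].
  unfold Rpower. rewrite exp_plus, exp_ln; auto.
Qed.

Lemma gk_upper k c : 0 < c -> (0 < block psi k -> c <= mk k) -> gk k <= block psi k * exp ((q - 1) * ln c).
Proof.
  intros Hc H. destruct (block_ge0 psi k) as [Hb|Hb].
  - specialize (H Hb). rewrite gk_pos_eq; auto. rewrite exp_plus, exp_ln; auto.
    apply Rmult_le_compat_l; [lra|]. apply exp_mono_le.
    assert (ln c <= ln (mk k)) by (apply ln_le; lra). nra.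
  - unfold gk. rewrite <- Hb. lra.
Qed.

Lemma gk_lower k c : mk k <= c -> block psi k * exp ((q - 1) * ln c) <= gk k.
Proof.
  intros H. destruct (block_ge0 psi k) as [Hb|Hb].
  - rewrite gk_pos_eq; auto. rewrite exp_plus, exp_ln; auto.
    apply Rmult_le_compat_l; [lra|]. apply exp_mono_le. pose proof (block_le_mk k).
    assert (ln (mk k) <= ln c) by (apply ln_le; lra). nra.
  - rewrite <- Hb. rewrite Rmult_0_l. apply gk_ge0.
Qed.

Lemma b_exp_q b : 0 < b -> b * exp ((q - 1) * ln b) = exp (q * ln b).
Proof. intros. rewrite <- (exp_ln b) at 1; auto. rewrite <- exp_plus. f_equal. ring. Qed.


Lemma inv_ge0 y : 0 <= y -> 0 <= / y.
Proof. intros [H|H]. left; apply Rinv_0_lt_compat; auto. subst; rewrite Rinv_0; lra. Qed.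

Definition yk (k : nat) : R := if Rlt_dec 0 (mk k) then block psi k / mk k else 0.

Lemma yk_ge0 k : 0 <= yk k.
Proof. unfold yk; destruct Rlt_dec; [|lra]. unfold Rdiv; apply Rmult_le_pos. apply block_ge0. left; apply Rinv_0_lt_compat; auto. Qed.

Lemma yk_le1 k : yk k <= 1.
Proof.
  unfold yk; destruct Rlt_dec; [|lra]. pose proof (block_le_mk k).
  unfold Rdiv. apply Rmult_le_reg_r with (mk k); auto. rewrite Rmult_assoc, Rinv_l; lra.
Qed.

Definition nl (k : nat) : R := - lambda kappa (S k).

Definition cellb (i j : nat) : bool :=
  if Rle_dec (INR i * eps) (nl j) then (if Rlt_dec (nl j) ((INR i + 1) * eps) then true else false) else false.

Definition cterm (i j : nat) : R := if cellb i j then block psi j else 0.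
Definition Ci (i : nat) : R := Series (cterm i).

Lemma cterm_bnd i j : 0 <= cterm i j <= block psi j.
Proof. unfold cterm; destruct cellb; pose proof (block_ge0 psi j); lra. Qed.

Lemma ex_cterm i : ex_series (cterm i).
Proof. destruct Hpsi as [_ H]. apply (series_le_gen _ (block psi)); auto. apply cterm_bnd. Qed.

Lemma cell_close i j k : cellb i j = true -> cellb i k = true ->
  Rabs (lambda kappa (S j) - lambda kappa (S k)) < eps.
Proof.
  unfold cellb, nl. intros H1 H2.
  destruct (Rle_dec _ (- lambda kappa (S j))); [|discriminate].
  destruct (Rlt_dec (- lambda kappa (S j))); [|discriminate].
  destruct (Rle_dec _ (- lambda kappa (S k))); [|discriminate].
  destruct (Rlt_dec (- lambda kappa (S k))); [|discriminate].
  apply Rabs_def1; lra.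
Qed.

Lemma cell_exists (M : nat) x : 0 <= x -> x < (INR M + 1) * eps ->
  exists i, (i <= M)%nat /\ INR i * eps <= x < (INR i + 1) * eps.
Proof.
  intros H0. induction M; intros H.
  - exists O. simpl in *. split; [lia|lra].
  - destruct (Rlt_dec x ((INR M + 1) * eps)) as [h|h].
    + destruct (IHM h) as [i [Hi1 Hi2]]. exists i; split; [lia|auto].
    + exists (S M). split; [lia|]. rewrite S_INR in *. lra.
Qed.

Lemma Lam_nl k : nl k = (kappa ^ 2 / 4) / (INR (S k)) ^ 2.
Proof. unfold nl, lambda. field. apply not_0_INR. lia. Qed.

Lemma nl_pos k : 0 < kappa -> 0 < nl k.
Proof.
  intros Hk. rewrite Lam_nl. apply Rdiv_lt_0_compat. nra. apply pow_lt. apply lt_0_INR; lia.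
Qed.

Lemma nl_le k K1 : 0 < kappa -> (K1 <= k)%nat -> nl k <= (kappa ^ 2 / 4) / (INR K1 + 1) ^ 2.
Proof.
  intros Hk H. rewrite Lam_nl. unfold Rdiv. apply Rmult_le_compat_l. nra.
  apply Rinv_le_contravar. apply pow_lt. pose proof (pos_INR K1); lra.
  apply pow_incr. split. pose proof (pos_INR K1); lra. rewrite S_INR. apply Rplus_le_compat_r, le_INR; auto.
Qed.

Lemma yk_point (K1 M : nat) k : 0 < kappa ->
  (kappa ^ 2 / 4) / (INR K1 + 1) ^ 2 < (INR M + 1) * eps ->
  yk k <= (if Nat.ltb k K1 then 1 else 0) + sum_n (fun i => cterm i k / Ci i) M.
Proof.
  intros Hk HK.
  assert (Hs : 0 <= sum_n (fun i => cterm i k / Ci i) M).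
  { apply sum_n_ge0. intros i. unfold Rdiv. apply Rmult_le_pos. apply cterm_bnd.
    apply inv_ge0. apply series_ge0. apply cterm_bnd. }
  destruct (Nat.ltb_spec k K1).
  - pose proof (yk_le1 k). lra.
  - pose proof (nl_le k K1 Hk H). pose proof (nl_pos k Hk).
    destruct (cell_exists M (nl k)) as [i [HiM Hi]]; try lra.
    assert (Hc : cellb i k = true).
    { unfold cellb. destruct Rle_dec; [|lra]. destruct Rlt_dec; [auto|lra]. }
    assert (Hyt : yk k <= cterm i k / Ci i).
    { unfold cterm. rewrite Hc. destruct (block_ge0 psi k) as [Hb|Hb].
      - assert (HC1 : block psi k <= Ci i).
        { unfold Ci. replace (block psi k) with (cterm i k) by (unfold cterm; rewrite Hc; auto).
          apply term_le_series. apply cterm_bnd. apply ex_cterm. }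
        assert (HC2 : Ci i <= mk k).
        { apply mk_ge_sub. intros j Hj. apply (cell_close i j k); auto. }
        unfold yk. destruct Rlt_dec; [|lra]. unfold Rdiv. apply Rmult_le_compat_l. lra.
        apply Rinv_le_contravar; lra.
      - unfold yk. rewrite <- Hb. destruct Rlt_dec; unfold Rdiv; rewrite ?Rmult_0_l; lra. }
    eapply Rle_trans. apply Hyt.
    replace (cterm i k / Ci i) with ((fun i => cterm i k / Ci i) i) by auto.
    assert (0 <= sum_n (fun i => cterm i k / Ci i) M).
    auto.
    pose proof (term_le_sum (fun i => cterm i k / Ci i) i M). simpl in H3. 
    assert ((cterm i k / Ci i) <= sum_n (fun i => cterm i k / Ci i) M).
    { apply H3; auto. intros i'. unfold Rdiv. apply Rmult_le_pos. apply cterm_bnd.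
      apply inv_ge0. apply series_ge0. apply cterm_bnd. }
    lra.
Qed.

Lemma count_lt K1 n : sum_n (fun k => if Nat.ltb k K1 then 1 else 0) n = INR (Nat.min (S n) K1).
Proof.
  induction n.
  - rewrite sum_O. destruct K1; simpl; auto.
  - rewrite sum_Sn, IHn. change (@plus R_AbelianMonoid ?a ?b) with (a + b).
    destruct (Nat.ltb_spec (S n) K1).
    + rewrite (Nat.min_l (S n) K1) by lia. rewrite (Nat.min_l (S (S n)) K1) by lia. rewrite (S_INR (S n)). lra.
    + rewrite (Nat.min_r (S (S n)) K1) by lia.
      rewrite (Nat.min_r (S n) K1) by lia. lra.
Qed.

Lemma J_bound (K1 M : nat) n : 0 < kappa ->
  (kappa ^ 2 / 4) / (INR K1 + 1) ^ 2 < (INR M + 1) * eps ->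
  sum_n yk n <= INR K1 + INR M + 1.
Proof.
  intros Hk HK.
  eapply Rle_trans. apply sumn_le. intros k. apply (yk_point K1 M k Hk HK).
  rewrite sumn_plus. rewrite count_lt.
  assert (INR (Nat.min (S n) K1) <= INR K1) by (apply le_INR; lia).
  rewrite <- (sum_n_switch (fun i k => cterm i k / Ci i)).
  assert (sum_n (fun i => sum_n (fun k => cterm i k / Ci i) n) M <= sum_n (fun _ => 1) M).
  { apply sumn_le. intros i. unfold Rdiv. rewrite sumn_scal_r.
    destruct (series_ge0 (cterm i) (fun j => proj1 (cterm_bnd i j))) as [Hp|Hp].
    - fold (Ci i) in Hp. apply Rmult_le_reg_r with (Ci i); auto. rewrite Rmult_assoc, Rinv_l, Rmult_1_r, Rmult_1_l by lra.
      apply sum_le_series. intros j; apply cterm_bnd. apply ex_cterm.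
    - fold (Ci i) in Hp. rewrite <- Hp, Rinv_0, Rmult_0_r. lra. }
  rewrite sum_n_const in H0. rewrite S_INR in H0. lra.
Qed.

Lemma exp_convex a c t : 0 <= t <= 1 -> exp (t * a + (1 - t) * c) <= t * exp a + (1 - t) * exp c.
Proof.
  intros Ht. set (z := t * a + (1 - t) * c).
  assert (Ha : exp z * (1 + (a - z)) <= exp a).
  { replace (exp a) with (exp z * exp (a - z)) by (rewrite <- exp_plus; f_equal; ring).
    apply Rmult_le_compat_l. left; apply exp_pos. apply exp_ineq1_le. }
  assert (Hc : exp z * (1 + (c - z)) <= exp c).
  { replace (exp c) with (exp z * exp (c - z)) by (rewrite <- exp_plus; f_equal; ring).
    apply Rmult_le_compat_l. left; apply exp_pos. apply exp_ineq1_le. }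
  assert (t * (exp z * (1 + (a - z))) + (1 - t) * (exp z * (1 + (c - z))) = exp z).
  { unfold z. ring. }
  assert (t * (exp z * (1 + (a - z))) <= t * exp a) by (apply Rmult_le_compat_l; lra).
  assert ((1 - t) * (exp z * (1 + (c - z))) <= (1 - t) * exp c) by (apply Rmult_le_compat_l; lra).
  lra.
Qed.


Lemma gk_amgm k T N : 0 < T -> 0 < N -> 0 < q ->
  gk k <= exp (q * ln T + (1 - q) * ln N) * (q * (block psi k / T) + (1 - q) * (yk k / N)).
Proof.
  intros HT HN Hq0.
  destruct (block_ge0 psi k) as [Hb|Hb].
  - pose proof (block_le_mk k) as Hm. rewrite gk_pos_eq; auto.
    assert (Hy : yk k = exp (ln (block psi k) - ln (mk k))).
    { unfold yk. destruct Rlt_dec; [|lra]. unfold Rminus. rewrite exp_plus, exp_Ropp, !exp_ln; auto; lra. }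
    assert (Hb' : block psi k / T = exp (ln (block psi k) - ln T)).
    { unfold Rminus. rewrite exp_plus, exp_Ropp, !exp_ln; auto. }
    assert (HyN : yk k / N = exp (ln (block psi k) - ln (mk k) - ln N)).
    { rewrite Hy. unfold Rminus at 2. rewrite (exp_plus _ (- ln N)), exp_Ropp, exp_ln; auto. }
    rewrite Hb', HyN.
    eapply Rle_trans; [| apply Rmult_le_compat_l; [left; apply exp_pos| apply exp_convex; lra]].
    rewrite <- exp_plus. apply Req_le. f_equal. ring.
  - unfold gk. rewrite <- Hb, Rmult_0_l.
    apply Rmult_le_pos. left; apply exp_pos.
    apply Rplus_le_le_0_compat; apply Rmult_le_pos; try lra; unfold Rdiv; apply Rmult_le_pos;
    try apply yk_ge0; try lra; left; apply Rinv_0_lt_compat; auto.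
Qed.

Lemma I_upper_gen N : 0 < kappa -> 0 < q -> 0 < Tot psi -> 0 < N -> (forall n, sum_n yk n <= N) ->
  ex_series gk /\ Series gk <= exp (q * ln (Tot psi) + (1 - q) * ln N).
Proof.
  intros Hk Hq0 HT HN HJ. apply series_bound. apply gk_ge0.
  intros n. set (P := exp (q * ln (Tot psi) + (1 - q) * ln N)).
  eapply Rle_trans. apply sumn_le. intros k. apply (gk_amgm k (Tot psi) N HT HN Hq0).
  fold P. rewrite sumn_scal_l, sumn_plus, sumn_scal_l, sumn_scal_l.
  unfold Rdiv. rewrite sumn_scal_r, sumn_scal_r.
  assert (H1 : sum_n (block psi) n <= Tot psi).
  { apply sum_le_series. apply block_ge0. apply Hpsi. }
  specialize (HJ n).
  assert (H2 : sum_n (block psi) n * / Tot psi <= 1).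
  { apply Rmult_le_reg_r with (Tot psi); auto. rewrite Rmult_assoc, Rinv_l; lra. }
  assert (H3 : sum_n yk n * / N <= 1).
  { apply Rmult_le_reg_r with N; auto. rewrite Rmult_assoc, Rinv_l; lra. }
  assert (0 < P) by (apply exp_pos).
  assert (q * (sum_n (block psi) n * / Tot psi) + (1 - q) * (sum_n yk n * / N) <= 1).
  { assert (q * (sum_n (block psi) n * / Tot psi) <= q * 1) by (apply Rmult_le_compat_l; lra).
    assert ((1 - q) * (sum_n yk n * / N) <= (1 - q) * 1) by (apply Rmult_le_compat_l; lra). lra. }
  assert (P * (q * (sum_n (block psi) n * / Tot psi) + (1 - q) * (sum_n yk n * / N)) <= P * 1)
    by (apply Rmult_le_compat_l; lra).
  lra.
Qed.

Lemma Tot0_blocks k : Tot psi = 0 -> block psi k = 0.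
Proof. intros H. pose proof (block_le_Tot psi k Hpsi). pose proof (block_ge0 psi k). lra. Qed.

Lemma ex_gk : 0 < kappa -> 0 < q -> ex_series gk.
Proof.
  intros Hk Hq0. destruct (Tot_ge0 psi) as [HT|HT].
  - destruct (INR_archimed eps (kappa ^ 2 / 4) Heps) as [M HM].
    apply (proj1 (I_upper_gen (INR 0 + INR M + 1) Hk Hq0 HT ltac:(simpl; pose proof (pos_INR M); lra)
       (fun n => J_bound 0 M n Hk ltac:(simpl; replace ((0+1)^2) with 1 by ring; lra)))).
  - apply ex_series_ext with (fun _ => 0). intros k. unfold gk. rewrite Tot0_blocks; auto. rewrite Rmult_0_l. reflexivity.
    exists 0. assert (is_lim_seq (sum_n (fun _ : nat => 0)) 0).
    apply (is_lim_seq_ext (fun _ => 0)). intros n. rewrite sum_n_const. simpl; ring.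
    apply is_lim_seq_const. exact H.
Qed.

Lemma I_lower_T : 0 < kappa -> 0 < q -> 0 < Tot psi -> exp (q * ln (Tot psi)) <= Series gk.
Proof.
  intros Hk Hq0 HT.
  rewrite <- b_exp_q; auto. unfold Tot at 1. rewrite <- Series_scal_r.
  apply Series_le. intros k. split. apply Rmult_le_pos. apply block_ge0. left; apply exp_pos.
  apply gk_lower. apply mk_le_Tot. apply ex_gk; auto.
Qed.


Definition Cq : R := q * Rabs (ln (Tot psi)) / (1 - q) + ln (2 + kappa ^ 2 / 4).

Lemma Cq_ge0 : 0 < kappa -> 0 < q -> 0 <= Cq.
Proof.
  intros Hk Hq0. unfold Cq. apply Rplus_le_le_0_compat.
  unfold Rdiv. apply Rmult_le_pos. apply Rmult_le_pos. lra. apply Rabs_pos. left; apply Rinv_0_lt_compat; lra.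
  rewrite <- ln_1. apply ln_le. lra. nra.
Qed.

Lemma div_le_aux a b D : 0 < D -> a <= b * D -> a / D <= b.
Proof. intros HD H. apply Rmult_le_reg_r with D; auto. unfold Rdiv. rewrite Rmult_assoc, Rinv_l; lra. Qed.
Lemma div_ge_aux a b D : 0 < D -> b * D <= a -> b <= a / D.
Proof. intros HD H. apply Rmult_le_reg_r with D; auto. unfold Rdiv. rewrite Rmult_assoc, Rinv_l; lra. Qed.

Lemma dim_bounds : 0 < kappa -> 0 < q -> 0 < Tot psi -> eps < 1 ->
  - Cq / (- ln eps) <= ln (Series gk) / ((q - 1) * ln eps) /\
  ln (Series gk) / ((q - 1) * ln eps) <= / 3 + Cq / (- ln eps).
Proof.
  intros Hk Hq0 HT He1.
  set (L := - ln eps).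
  assert (HL : 0 < L). { unfold L. assert (ln eps < ln 1) by (apply ln_increasing; lra). rewrite ln_1 in H. lra. }
  assert (HD : (q - 1) * ln eps = (1 - q) * L) by (unfold L; ring).
  rewrite HD.
  assert (HD0 : 0 < (1 - q) * L) by (apply Rmult_lt_0_compat; lra).
  pose proof (I_lower_T Hk Hq0 HT) as Hlow.
  assert (HIpos : 0 < Series gk) by (eapply Rlt_le_trans; [apply exp_pos|apply Hlow]).
  assert (Hlnlow : q * ln (Tot psi) <= ln (Series gk)).
  { rewrite <- (ln_exp (q * ln (Tot psi))). apply ln_le; auto. apply exp_pos. }
  assert (Habs : q * Rabs (ln (Tot psi)) = (1 - q) * (q * Rabs (ln (Tot psi)) / (1 - q))) by (field; lra).
  assert (Hab1 : - Rabs (ln (Tot psi)) <= ln (Tot psi) <= Rabs (ln (Tot psi))).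
  { split; [| apply Rle_abs]. pose proof (Rle_abs (- ln (Tot psi))) as Hx. rewrite Rabs_Ropp in Hx. lra. }
  assert (Hq1 : q * ln (Tot psi) <= q * Rabs (ln (Tot psi))) by (apply Rmult_le_compat_l; lra).
  assert (Hq2 : - (q * Rabs (ln (Tot psi))) <= q * ln (Tot psi)) by (rewrite Ropp_mult_distr_r; apply Rmult_le_compat_l; lra).
  assert (Hln2 : 0 <= ln (2 + kappa ^ 2 / 4)) by (rewrite <- ln_1; apply ln_le; nra).
  split.
  - apply div_ge_aux; auto. unfold Cq.
    replace (- (q * Rabs (ln (Tot psi)) / (1 - q) + ln (2 + kappa ^ 2 / 4)) / L * ((1 - q) * L))
      with (- (q * Rabs (ln (Tot psi))) - (1 - q) * ln (2 + kappa ^ 2 / 4)) by (field; lra).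
    assert (0 <= (1 - q) * ln (2 + kappa ^ 2 / 4)) by (apply Rmult_le_pos; lra). lra.
  - apply div_le_aux; auto.
    set (r := exp (L / 3)).
    assert (Hr1 : 1 <= r). { unfold r. rewrite <- exp_0. apply exp_mono_le. lra. }
    assert (Hr3 : r * r * r * eps = 1).
    { unfold r. rewrite <- !exp_plus. replace (L/3 + L/3 + L/3) with L by field.
      unfold L. rewrite exp_Ropp, exp_ln by auto. field. lra. }
    destruct (floor_ex r) as [K1 [HK1a HK1b]]; [lra|].
    assert (HLam : 0 < kappa ^ 2 / 4) by nra.
    destruct (floor_ex (kappa ^ 2 / 4 * r)) as [M [HMa HMb]]; [nra|].
    assert (HKM : kappa ^ 2 / 4 / (INR K1 + 1) ^ 2 < (INR M + 1) * eps).
    { apply Rlt_le_trans with (kappa ^ 2 / 4 * r * eps).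
      - replace (kappa ^ 2 / 4 * r * eps) with (kappa ^ 2 / 4 / (r * r)).
        apply Rmult_lt_compat_l; auto. apply Rinv_lt_contravar. nra. simpl. nra.
        assert (He' : eps = / (r * r * r)).
        { apply Rmult_eq_reg_l with (r * r * r). rewrite Rinv_r by nra. lra. nra. }
        rewrite He'. field. lra.
      - apply Rmult_le_compat_r; lra. }
    set (N := INR K1 + INR M + 1).
    assert (HN0 : 0 < N) by (unfold N; pose proof (pos_INR K1); pose proof (pos_INR M); lra).
    destruct (I_upper_gen N Hk Hq0 HT HN0 (fun n => J_bound K1 M n Hk HKM)) as [_ HIup].
    assert (HNr : N <= (2 + kappa ^ 2 / 4) * r) by (unfold N; nra).
    assert (HlnN : ln N <= ln (2 + kappa ^ 2 / 4) + L / 3).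
    { replace (L / 3) with (ln r) by (unfold r; rewrite ln_exp; auto).
      rewrite <- ln_mult by lra. apply ln_le; auto. }
    assert (HlnI : ln (Series gk) <= q * ln (Tot psi) + (1 - q) * ln N).
    { rewrite <- (ln_exp (q * ln (Tot psi) + (1 - q) * ln N)). apply ln_le; auto. }
    assert ((1 - q) * ln N <= (1 - q) * (ln (2 + kappa ^ 2 / 4) + L / 3)) by (apply Rmult_le_compat_l; lra).
    unfold Cq.
    replace ((/ 3 + (q * Rabs (ln (Tot psi)) / (1 - q) + ln (2 + kappa ^ 2 / 4)) / L) * ((1 - q) * L))
      with ((1 - q) * L / 3 + q * Rabs (ln (Tot psi)) + (1 - q) * ln (2 + kappa ^ 2 / 4)) by (field; lra).
    lra.
Qed.


Lemma sumn_ext (a b : nat -> R) n : (forall k, a k = b k) -> sum_n a n = sum_n b n.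
Proof. intros H; apply sum_n_ext; auto. Qed.

Lemma tail_mono K0 K' : (K0 <= K')%nat -> tail psi K' <= tail psi K0.
Proof.
  intros H. rewrite <- !tail_series. apply Series_le.
  intros j. destruct (Nat.leb_spec K' j); destruct (Nat.leb_spec K0 j); try lia; pose proof (block_ge0 psi j); lra.
  apply (series_le_gen _ (block psi)). intros j; destruct Nat.leb; pose proof (block_ge0 psi j); lra. apply Hpsi.
Qed.

Lemma ln_nonpos x : x <= 0 -> ln x = 0.
Proof. intros H; unfold ln; destruct Rlt_dec; auto; exfalso; lra. Qed.

Lemma exp_q_le1b b : 0 < b -> 0 <= q -> exp (q * ln b) <= 1 + b.
Proof.
  intros Hb Hq0. destruct (Rle_dec b 1).
  - assert (ln b <= 0) by (rewrite <- ln_1; apply ln_le; lra).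
    assert (exp (q * ln b) <= exp 0) by (apply exp_mono_le; nra). rewrite exp_0 in H0. lra.
  - assert (0 <= ln b) by (rewrite <- ln_1; apply ln_le; lra).
    assert (exp (q * ln b) <= exp (ln b)) by (apply exp_mono_le; nra). rewrite exp_ln in H0; lra.
Qed.

Lemma exp_q_small b s N : 0 < b -> b <= s -> s <= 1 -> 0 < N -> / N <= q ->
  exp (q * ln b) <= exp (/ N * ln s).
Proof.
  intros Hb Hbs Hs HN Hq0. apply exp_mono_le.
  assert (ln b <= ln s) by (apply ln_le; lra).
  assert (ln s <= 0) by (rewrite <- ln_1; apply ln_le; lra).
  assert (q * ln b <= / N * ln b) by nra.
  assert (0 < / N) by (apply Rinv_0_lt_compat; auto).
  assert (/ N * ln b <= / N * ln s) by (apply Rmult_le_compat_l; lra). lra.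
Qed.

Lemma U_bound N K0 K' s tau : 0 < kappa -> 1 <= N -> / N <= q -> (K0 <= K')%nat ->
  kappa ^ 2 / 4 / (INR (S K')) ^ 2 < eps -> 0 < s <= 1 -> tail psi K0 < s -> Tot psi < tau ->
  Series gk <= INR K0 + tau + (INR (K' - K0) + 1) * exp (/ N * ln s).
Proof.
  intros Hk HN Hq0 HKK HK' Hs Htail HT.
  assert (Hq0' : 0 < q). { assert (0 < / N) by (apply Rinv_0_lt_compat; lra). lra. }
  set (sg := exp (/ N * ln s)).
  set (tp := tail psi K').
  set (c := exp ((q - 1) * ln tp)).
  assert (Htp : tp <= tail psi K0) by (apply tail_mono; auto).
  assert (Htp0 : 0 <= tp) by apply tail_ge0.
  assert (Hpt : forall k, gk k <= (if Nat.ltb k K0 then 1 else 0) + block psi k +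
       (if andb (Nat.leb K0 k) (Nat.ltb k K') then sg else 0) + (if Nat.leb K' k then block psi k * c else 0)).
  { intros k. pose proof (gk_ge0 k).
    assert (Hsg : 0 < sg) by apply exp_pos.
    destruct (block_ge0 psi k) as [Hb|Hb].
    2:{ unfold gk at 1. rewrite <- Hb, Rmult_0_l.
        destruct (Nat.ltb k K0); destruct (andb (Nat.leb K0 k) (Nat.ltb k K')); destruct (Nat.leb K' k); lra. }
    assert (Hgb : gk k <= exp (q * ln (block psi k))).
    { rewrite <- b_exp_q; auto. apply gk_upper; auto. intros; apply block_le_mk. }
    destruct (Nat.ltb_spec k K0).
    - pose proof (exp_q_le1b _ Hb ltac:(lra)).
      destruct (andb (Nat.leb K0 k) (Nat.ltb k K')); destruct (Nat.leb_spec K' k); try lia;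
      try (assert (0 <= block psi k * c) by (apply Rmult_le_pos; [lra|left; apply exp_pos])); lra.
    - destruct (Nat.ltb_spec k K').
      + destruct (Nat.leb_spec K0 k); try lia. destruct (Nat.leb_spec K' k); try lia. cbn [andb].
        assert (Hbs : block psi k <= s). { pose proof (block_le_tail psi K0 k Hpsi ltac:(lia)). lra. }
        pose proof (exp_q_small (block psi k) s N Hb Hbs (proj2 Hs) ltac:(lra) Hq0) as Hx. fold sg in Hx. cbv beta iota. lra.
      + destruct (Nat.leb_spec K0 k); try lia. destruct (Nat.leb_spec K' k); try lia. cbn [andb].
        assert (Hbt : block psi k <= tp) by (apply block_le_tail; auto).
        assert (gk k <= block psi k * c).
        { apply gk_upper. lra. intros _. unfold tp. rewrite <- tail_series.
          apply mk_ge_sub. intros j Hj. apply Nat.leb_le in Hj.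
          pose proof (nl_le j K' Hk Hj). pose proof (nl_le k K' Hk H1).
          pose proof (nl_pos j Hk). pose proof (nl_pos k Hk).
          rewrite S_INR in HK'.
          unfold nl in *. apply Rabs_def1; lra. }
        cbv beta iota. lra. }
  apply series_bound. apply gk_ge0. intros n.
  eapply Rle_trans. apply sumn_le. apply Hpt. rewrite !sumn_plus.
  rewrite count_lt.
  assert (H1 : INR (Nat.min (S n) K0) <= INR K0) by (apply le_INR; lia).
  assert (H2 : sum_n (block psi) n <= Tot psi) by (apply sum_le_series; [apply block_ge0|apply Hpsi]).
  assert (Hsg : 0 < sg) by apply exp_pos.
  assert (H3 : sum_n (fun k => if andb (Nat.leb K0 k) (Nat.ltb k K') then sg else 0) n <= sg * INR (K' - K0)).
  { rewrite (sumn_ext _ (fun k => sg * (if Nat.ltb k K' then 1 else 0) + (- sg) * (if Nat.ltb k K0 then 1 else 0))).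
    rewrite sumn_plus, !sumn_scal_l, !count_lt.
    assert (Hm : (Nat.min (S n) K' <= Nat.min (S n) K0 + (K' - K0))%nat) by lia.
    apply le_INR in Hm. rewrite plus_INR in Hm.
    assert (sg * INR (Nat.min (S n) K') <= sg * (INR (Nat.min (S n) K0) + INR (K' - K0))) by (apply Rmult_le_compat_l; lra).
    lra.
    intros k. destruct (Nat.leb_spec K0 k); destruct (Nat.ltb_spec k K'); destruct (Nat.ltb_spec k K0); try lia;
    cbn [andb]; ring. }
  assert (H4 : sum_n (fun k => if Nat.leb K' k then block psi k * c else 0) n <= sg).
  { rewrite (sumn_ext _ (fun k => (if Nat.leb K' k then block psi k else 0) * c)).
    2:{ intros k; destruct Nat.leb; ring. }
    rewrite sumn_scal_r.
    assert (Hs1 : sum_n (fun k => if Nat.leb K' k then block psi k else 0) n <= tp).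
    { unfold tp. rewrite <- tail_series. apply sum_le_series.
      intros j; destruct Nat.leb; [apply block_ge0|lra].
      apply (series_le_gen _ (block psi)). intros j; destruct Nat.leb; pose proof (block_ge0 psi j); lra. apply Hpsi. }
    assert (Hs0 : 0 <= sum_n (fun k => if Nat.leb K' k then block psi k else 0) n).
    { apply sum_n_ge0. intros j; destruct Nat.leb; [apply block_ge0|lra]. }
    assert (Hc : 0 < c) by apply exp_pos.
    destruct Htp0 as [Htp0|Htp0].
    - assert (Hx1 : tp * c <= sg).
      { unfold c. rewrite b_exp_q; auto. apply exp_q_small; auto; lra. }
      assert (Hx2 : sum_n (fun k => if Nat.leb K' k then block psi k else 0) n * c <= tp * c)
        by (apply Rmult_le_compat_r; lra). eapply Rle_trans; [exact Hx2|exact Hx1].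
    - rewrite <- Htp0 in Hs1. apply Rle_trans with (0 * c).
      apply Rmult_le_compat_r; [lra|exact Hs1]. lra. }
  eapply Rle_trans.
  apply Rplus_le_compat; [apply Rplus_le_compat; [apply Rplus_le_compat; [exact H1 | exact H2] | exact H3] | exact H4].
  lra.
Qed.


Lemma count_ge K1 n : sum_n (fun k => if Nat.leb K1 k then 1 else 0) n = INR (S n - K1).
Proof.
  induction n.
  - rewrite sum_O. destruct K1; simpl; auto.
  - rewrite sum_Sn, IHn. change (@plus R_AbelianMonoid ?a ?b) with (a + b).
    destruct (Nat.leb_spec K1 (S n)).
    + replace (S (S n) - K1)%nat with (S (S n - K1)) by lia. rewrite S_INR. lra.
    + replace (S (S n) - K1)%nat with 0%nat by lia. replace (S n - K1)%nat with 0%nat by lia. simpl; lra.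
Qed.

Lemma V_bound K1 K a : 0 < kappa -> 0 < q -> (K1 < K)%nat -> 0 < a ->
  (forall k j, (k < K)%nat -> j <> k -> eps <= Rabs (lambda kappa (S j) - lambda kappa (S k))) ->
  (forall k, (K1 <= k < K)%nat -> a < block psi k) ->
  INR (K - K1) * exp (q * ln a) <= Series gk.
Proof.
  intros Hk Hq0 HK Ha Hgap Hb.
  set (E := exp (q * ln a)).
  eapply Rle_trans; [| apply (sum_le_series gk (K - 1)); [apply gk_ge0 | apply ex_gk; auto]].
  eapply Rle_trans with (sum_n (fun k => if andb (Nat.leb K1 k) (Nat.ltb k K) then E else 0) (K - 1)).
  - rewrite (sumn_ext _ (fun k => (if andb (Nat.leb K1 k) (Nat.ltb k K) then 1 else 0) * E)).
    2:{ intros k; destruct andb; ring. }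
    rewrite sumn_scal_r. apply Rmult_le_compat_r. left; apply exp_pos.
    rewrite (sum_n_ext_loc _ (fun k => if Nat.leb K1 k then 1 else 0)).
    rewrite count_ge. replace (S (K - 1)) with K by lia. lra.
    intros k Hk'. destruct (Nat.ltb_spec k K); try lia. destruct (Nat.leb K1 k); reflexivity.
  - apply sumn_le. intros k.
    destruct (Nat.leb_spec K1 k); destruct (Nat.ltb_spec k K); cbn [andb]; try apply gk_ge0.
    specialize (Hb k (conj H H0)).
    assert (Hbp : 0 < block psi k) by lra.
    assert (Hm : mk k <= block psi k) by (apply mk_le_block; intros j Hj; apply Hgap; auto).
    pose proof (gk_lower k (block psi k) Hm). rewrite b_exp_q in H1; auto.
    assert (E <= exp (q * ln (block psi k))).
    { apply exp_mono_le. assert (ln a <= ln (block psi k)) by (apply ln_le; lra). nra. }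
    lra.
Qed.

End MU.

Definition fdim kappa psi q eps := ln (I_mu kappa psi q eps) / ((q - 1) * ln eps).

Definition Uset (kappa : R) (m : nat) (psi : vec) : Prop :=
  inH psi /\ exists eps K0 K' s tau,
    0 < eps < / INR (S m) /\ eps < 1 /\ (K0 <= K')%nat /\ kappa ^ 2 / 4 / (INR (S K')) ^ 2 < eps /\
    0 < s <= 1 /\
    INR K0 + tau + (INR (K' - K0) + 1) * exp (/ INR (S m) * ln s) <=
      exp (/ (INR (S m) * INR (S m)) * (- ln eps)) /\
    tail psi K0 < s /\ Tot psi < tau.

Definition Vset (kappa : R) (m : nat) (psi : vec) : Prop :=
  inH psi /\ exists eps K1 K a,
    0 < eps < / INR (S m) /\ eps < 1 /\ (K1 < K)%nat /\ 0 < a /\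
    (forall k j, (k < K)%nat -> j <> k -> eps <= Rabs (lambda kappa (S j) - lambda kappa (S k))) /\
    (forall q, / INR (S m) <= q <= 1 - / INR (S m) ->
       (1 - q) * (/ 3 - / INR (S m)) * (- ln eps) <= ln (INR (K - K1)) + q * ln a) /\
    (forall k, (K1 <= k < K)%nat -> a < block psi k).

Lemma INRS_ge1 m : 1 <= INR (S m).
Proof. rewrite S_INR. pose proof (pos_INR m). lra. Qed.

Lemma U_impl kappa m psi q : 0 < kappa -> Uset kappa m psi ->
  / INR (S m) <= q <= 1 - / INR (S m) ->
  exists eps, 0 < eps < / INR (S m) /\ fdim kappa psi q eps <= / INR (S m).
Proof.
  intros Hk [Hpsi [eps [K0 [K' [s [tau [He [He1 [HKK [HK' [Hs [Hnum [Htail HT]]]]]]]]]]]]] Hq.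
  set (N := INR (S m)) in *.
  assert (HN : 1 <= N) by apply INRS_ge1.
  assert (HN0 : 0 < / N) by (apply Rinv_0_lt_compat; lra).
  exists eps. split; auto.
  assert (Hq1 : q < 1) by lra.
  pose proof (U_bound kappa psi eps q Hpsi (proj1 He) Hq1 N K0 K' s tau Hk HN (proj1 Hq) HKK HK' Hs Htail HT) as HI.
  set (L := - ln eps).
  assert (HL : 0 < L). { unfold L. assert (ln eps < ln 1) by (apply ln_increasing; lra). rewrite ln_1 in H. lra. }
  unfold fdim. rewrite <- I_eq in HI.
  replace ((q - 1) * ln eps) with ((1 - q) * L) by (unfold L; ring).
  apply div_le_aux. apply Rmult_lt_0_compat; lra.
  assert (HlnI : ln (I_mu kappa psi q eps) <= / (N * N) * L).
  { destruct (Rle_dec (I_mu kappa psi q eps) 0) as [h|h].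
    - rewrite ln_nonpos; auto. apply Rmult_le_pos; [|lra]. left; apply Rinv_0_lt_compat; nra.
    - rewrite <- (ln_exp (/ (N * N) * L)). apply ln_le. lra. fold L in Hnum. lra. }
  assert (/ (N * N) * L = / N * (/ N * L)) by (field; lra).
  assert (/ N * L <= (1 - q) * L) by (apply Rmult_le_compat_r; lra).
  assert (/ N * (/ N * L) <= / N * ((1 - q) * L)) by (apply Rmult_le_compat_l; lra).
  lra.
Qed.

Lemma V_impl kappa m psi q : 0 < kappa -> Vset kappa m psi ->
  / INR (S m) <= q <= 1 - / INR (S m) ->
  exists eps, 0 < eps < / INR (S m) /\ / 3 - / INR (S m) <= fdim kappa psi q eps.
Proof.
  intros Hk [Hpsi [eps [K1 [K [a [He [He1 [HKK [Ha [Hgap [Hnum Hb]]]]]]]]]]] Hq.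
  set (N := INR (S m)) in *.
  assert (HN : 1 <= N) by apply INRS_ge1.
  assert (HN0 : 0 < / N) by (apply Rinv_0_lt_compat; lra).
  exists eps. split; auto.
  assert (Hq1 : q < 1) by lra.
  assert (Hq0 : 0 < q) by lra.
  pose proof (V_bound kappa psi eps q Hpsi (proj1 He) Hq1 K1 K a Hk Hq0 HKK Ha Hgap Hb) as HI.
  rewrite <- I_eq in HI.
  set (L := - ln eps).
  assert (HL : 0 < L). { unfold L. assert (ln eps < ln 1) by (apply ln_increasing; lra). rewrite ln_1 in H. lra. }
  unfold fdim.
  replace ((q - 1) * ln eps) with ((1 - q) * L) by (unfold L; ring).
  apply div_ge_aux. apply Rmult_lt_0_compat; lra.
  assert (HKp : 0 < INR (K - K1)) by (apply lt_0_INR; lia).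
  assert (Hpos : 0 < INR (K - K1) * exp (q * ln a)) by (apply Rmult_lt_0_compat; auto; apply exp_pos).
  assert (ln (INR (K - K1) * exp (q * ln a)) <= ln (I_mu kappa psi q eps)) by (apply ln_le; auto).
  rewrite ln_mult, ln_exp in H; auto; try apply exp_pos.
  specialize (Hnum q Hq). fold L in Hnum.
  replace ((/ 3 - / N) * ((1 - q) * L)) with ((1 - q) * (/ 3 - / N) * L) by ring. lra.
Qed.

Lemma U_open kappa m : openH (Uset kappa m).
Proof.
  split. intros v [Hv _]; auto.
  intros v [Hv [eps [K0 [K' [s [tau [He [He1 [HKK [HK' [Hs [Hnum [Htail HT]]]]]]]]]]]]].
  set (sig := Rmin (s - tail v K0) (tau - Tot v)).
  assert (Hsig : 0 < sig) by (unfold sig; apply Rmin_pos; lra).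
  destruct (usc_tail v sig Hv Hsig) as [eta [Heta Hw]].
  exists eta. split; auto. intros w Hwin Hd.
  split; auto. exists eps, K0, K', s, tau. repeat (split; auto).
  - pose proof (Hw w Hwin Hd K0). pose proof (Rmin_l (s - tail v K0) (tau - Tot v)). fold sig in H0. lra.
  - pose proof (Hw w Hwin Hd 0%nat). pose proof (Rmin_r (s - tail v K0) (tau - Tot v)). fold sig in H0.
    change (tail w 0) with (Tot w) in H. change (tail v 0) with (Tot v) in H. lra.
Qed.

Lemma finite_min (b : nat -> R) a K1 K : (forall k, (K1 <= k < K)%nat -> a < b k) ->
  exists sig, 0 < sig /\ forall k, (K1 <= k < K)%nat -> a + sig < b k.
Proof.
  induction K; intros H.
  - exists 1. split. lra. intros; lia.
  - destruct IHK as [s1 [Hs1 H1]]. intros; apply H; lia.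
    destruct (le_lt_dec K1 K).
    + assert (a < b K) by (apply H; lia).
      exists (Rmin s1 ((b K - a) / 2)). split. apply Rmin_pos; lra.
      intros k Hk. destruct (Nat.eq_dec k K).
      * subst. pose proof (Rmin_r s1 ((b K - a) / 2)). lra.
      * pose proof (Rmin_l s1 ((b K - a) / 2)). assert (a + s1 < b k) by (apply H1; lia). lra.
    + exists s1. split; auto. intros; lia.
Qed.

Lemma V_open kappa m : openH (Vset kappa m).
Proof.
  split. intros v [Hv _]; auto.
  intros v [Hv [eps [K1 [K [a [He [He1 [HKK [Ha [Hgap [Hnum Hb]]]]]]]]]]].
  destruct (finite_min (block v) a K1 K Hb) as [sig [Hsig Hs]].
  destruct (lsc_block v sig Hv Hsig) as [eta [Heta Hw]].
  exists eta. split; auto. intros w Hwin Hd.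
  split; auto. exists eps, K1, K, a. repeat (split; auto).
  intros k Hk. specialize (Hs k Hk). specialize (Hw w Hwin Hd k). lra.
Qed.

Lemma tail_small v sig : inH v -> 0 < sig -> exists K0, tail v K0 < sig.
Proof.
  intros Hv Hs. pose proof Hv as [_ Hex].
  assert (Hl : is_lim_seq (sum_n (block v)) (Tot v)) by exact (Series_correct _ Hex).
  apply is_lim_seq_spec in Hl. destruct (Hl (mkposreal sig Hs)) as [n Hn].
  specialize (Hn n (Nat.le_refl n)). simpl in Hn.
  exists (S n). unfold Tot in Hn.
  rewrite (Series_incr_n (block v) (S n)) in Hn; try lia; auto. simpl pred in Hn.
  rewrite sum_n_Reals in Hn. unfold tail.
  replace (sum_f_R0 (block v) n - (sum_f_R0 (block v) n + Series (fun k => block v (S n + k))))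
    with (- Series (fun k => block v (S n + k))) in Hn by ring.
  rewrite Rabs_Ropp in Hn. pose proof (Rle_abs (Series (fun k => block v (S n + k)))). lra.
Qed.

Lemma Series_zero : Series (fun _ => 0) = 0.
Proof.
  apply is_series_unique.
  assert (is_lim_seq (sum_n (fun _ : nat => 0)) 0).
  apply (is_lim_seq_ext (fun _ => 0)). intros n. rewrite sum_n_const. simpl; ring.
  apply is_lim_seq_const. exact H.
Qed.

Lemma sum_first (f : nat -> R) n : (forall i, (0 < i)%nat -> f i = 0) -> sum_n f n = f 0%nat.
Proof.
  intros H. induction n. apply sum_O. rewrite sum_Sn, IHn, (H (S n)) by lia.
  change (@plus R_AbelianMonoid ?a ?b) with (a + b). apply Rplus_0_r.
Qed.

Lemma sum_zero (f : nat -> R) n : (forall i, f i = 0) -> sum_n f n = 0.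
Proof. intros H. rewrite (sumn_ext f (fun _ => 0)) by auto. rewrite sum_n_const. apply Rmult_0_r. Qed.

Definition trunc (v : vec) (K0 : nat) : vec := fun n l j => if Nat.leb n K0 then v n l j else 0%C.

Lemma block_trunc v K0 k : block (trunc v K0) k = if Nat.ltb k K0 then block v k else 0.
Proof.
  unfold block, trunc. destruct (Nat.leb_spec (S k) K0); destruct (Nat.ltb_spec k K0); try lia.
  - reflexivity.
  - apply sum_zero. intros l. apply sum_zero. intros j. rewrite Cmod_0. ring.
Qed.

Lemma block_diff_trunc v K0 k : block (diffv v (trunc v K0)) k = if Nat.leb K0 k then block v k else 0.
Proof.
  unfold block, trunc, diffv. destruct (Nat.leb_spec (S k) K0); destruct (Nat.leb_spec K0 k); try lia.
  - apply sum_zero. intros l. apply sum_zero. intros j. unfold Cminus. rewrite Cplus_opp_r, Cmod_0. ring.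
  - apply sumn_ext; intros l. apply sumn_ext; intros j. unfold Cminus. rewrite Copp_0, Cplus_0_r. reflexivity.
Qed.

Lemma inH_trunc v K0 : inH v -> inH (trunc v K0).
Proof.
  intros [H0 Hex]. split.
  - intros n l j Hn. unfold trunc. destruct Nat.leb; auto.
  - apply (series_le_gen _ (block v)); auto. intros k. rewrite block_trunc. split.
    destruct Nat.ltb; [apply block_ge0|lra]. destruct Nat.ltb; [lra|apply block_ge0].
Qed.

Lemma dist_trunc v K0 : inH v -> distH v (trunc v K0) = sqrt (tail v K0).
Proof.
  intros Hv. unfold distH. f_equal. rewrite <- tail_series. apply Series_ext. intros k.
  apply block_diff_trunc.
Qed.

Lemma Tot_trunc v K0 : inH v -> Tot (trunc v K0) <= Tot v.
Proof.
  intros [H0 Hex]. apply Series_le; auto. intros k. rewrite block_trunc. split.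
  destruct Nat.ltb; [apply block_ge0|lra]. destruct Nat.ltb; [lra|apply block_ge0].
Qed.

Lemma tail_trunc v K0 : tail (trunc v K0) K0 = 0.
Proof.
  unfold tail. rewrite <- Series_zero. apply Series_ext. intros k. rewrite block_trunc.
  destruct (Nat.ltb_spec (K0 + k) K0); try lia; auto.
Qed.

Lemma sqrt_lt_sq x d : 0 <= x -> 0 < d -> x < d * d -> sqrt x < d.
Proof.
  intros Hx Hd H. rewrite <- (sqrt_square d) by lra. apply sqrt_lt_1; nra.
Qed.

Lemma U_dense kappa m : 0 < kappa -> denseH (Uset kappa m).
Proof.
  intros Hk v Hv del Hdel.
  destruct (tail_small v (del * del) Hv ltac:(nra)) as [K0 HK0].
  set (w := trunc v K0).
  exists w. split.
  2:{ unfold w. rewrite dist_trunc by auto. apply sqrt_lt_sq; auto. apply tail_ge0. }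
  split. apply inH_trunc; auto.
  set (N := INR (S m)). assert (HN : 1 <= N) by apply INRS_ge1.
  set (tau := Tot v + 1).
  pose proof (Tot_ge0 v).
  set (c0 := INR K0 + tau + 3).
  assert (Hc0 : 3 <= c0) by (unfold c0, tau; pose proof (pos_INR K0); lra).
  set (eps := exp (- (N * N * c0))).
  assert (Heps0 : 0 < eps) by apply exp_pos.
  assert (HepsN : eps < / N).
  { unfold eps. rewrite exp_Ropp. apply Rinv_lt_contravar. apply Rmult_lt_0_compat; [lra | apply exp_pos].
    pose proof (exp_ineq1_le (N * N * c0)). assert (N <= N * N * c0).
    { assert (1 <= N * c0) by nra. nra. } lra. }
  assert (HN1 : / N <= 1). { rewrite <- Rinv_1. apply Rinv_le_contravar; lra. }
  set (Lam := kappa ^ 2 / 4).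
  assert (HLam : 0 < Lam) by (unfold Lam; nra).
  destruct (INR_archimed 1 (Lam / eps + INR K0) ltac:(lra)) as [K' HK'].
  rewrite Rmult_1_r in HK'.
  assert (HKK : (K0 <= K')%nat).
  { apply INR_le. assert (0 <= Lam / eps) by (apply Rlt_le, Rdiv_lt_0_compat; auto). lra. }
  assert (HLe : Lam / eps < INR K').
  { pose proof (pos_INR K0). lra. }
  set (s := exp (- N * ln (INR K' + 2))).
  assert (Hln2 : 0 < ln (INR K' + 2)).
  { rewrite <- ln_1. apply ln_increasing. lra. pose proof (pos_INR K'). lra. }
  exists eps, K0, K', s, tau.
  split; [split; auto|]. split; [lra|]. split; auto. split.
  { fold Lam. rewrite S_INR.
    assert (Hx : 0 < INR K' + 1) by (pose proof (pos_INR K'); lra).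
    apply Rle_lt_trans with (Lam / (INR K' + 1)).
    - unfold Rdiv. apply Rmult_le_compat_l. lra. apply Rinv_le_contravar. lra.
      pose proof (pos_INR K'). nra.
    - apply Rmult_lt_reg_r with (INR K' + 1 ). lra. unfold Rdiv. rewrite Rmult_assoc, Rinv_l by lra.
      apply Rmult_lt_reg_r with (/ eps). apply Rinv_0_lt_compat; auto.
      replace (eps * (INR K' + 1) * / eps) with (INR K' + 1) by (field; lra).
      unfold Rdiv in HLe. lra. }
  split.
  { split. apply exp_pos. unfold s. rewrite <- exp_0. apply exp_mono_le. nra. }
  split.
  { assert (Hsn : exp (/ N * ln s) = / (INR K' + 2)).
    { unfold s. rewrite ln_exp. replace (/ N * (- N * ln (INR K' + 2))) with (- ln (INR K' + 2)) by (field; lra).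
      rewrite exp_Ropp, exp_ln; auto. pose proof (pos_INR K'); lra. }
    rewrite Hsn.
    assert (Hm : INR (K' - K0) <= INR K') by (apply le_INR; lia).
    assert (H1 : (INR (K' - K0) + 1) * / (INR K' + 2) <= 1).
    { apply Rmult_le_reg_r with (INR K' + 2). pose proof (pos_INR K'); lra.
      rewrite Rmult_assoc, Rinv_l, Rmult_1_r; pose proof (pos_INR K'); lra. }
    unfold eps. rewrite ln_exp. replace (/ (N * N) * - - (N * N * c0)) with c0 by (field; lra).
    pose proof (exp_ineq1_le c0). unfold c0 in *. lra. }
  split.
  { unfold w. rewrite tail_trunc. unfold s; apply exp_pos. }
  { unfold w. pose proof (Tot_trunc v K0 Hv). unfold tau. lra. }
Qed.

Lemma inv_sq_gap x y K : 1 <= x -> x + 1 <= y -> x <= K ->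
  / (K + 1) ^ 3 <= / x ^ 2 - / y ^ 2.
Proof.
  intros Hx Hy HK.
  assert (H1 : / y ^ 2 <= / (x + 1) ^ 2) by (apply Rinv_le_contravar; [nra| apply pow_incr; lra]).
  assert (H2 : / (K + 1) ^ 3 <= / (x + 1) ^ 3) by (apply Rinv_le_contravar; [nra| apply pow_incr; lra]).
  assert (H3 : / (x + 1) ^ 3 <= / x ^ 2 - / (x + 1) ^ 2).
  { assert (E : / x ^ 2 - / (x + 1) ^ 2 - / (x + 1) ^ 3 = ((2*x+1)*(x+1) - x^2) / (x^2 * (x+1)^3)) by (field; lra).
    assert (0 <= ((2*x+1)*(x+1) - x^2) / (x^2 * (x+1)^3)).
    { apply Rdiv_le_0_compat; nra. }
    lra. }
  lra.
Qed.

Lemma gap_lemma kappa K k j : 0 < kappa -> (k < K)%nat -> j <> k ->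
  kappa ^ 2 / 4 / (INR K + 1) ^ 3 <= Rabs (lambda kappa (S j) - lambda kappa (S k)).
Proof.
  intros Hk HkK Hjk. set (Lam := kappa ^ 2 / 4). assert (HL : 0 < Lam) by (unfold Lam; nra).
  assert (Heq : forall n, lambda kappa (S n) = - Lam * / (INR (S n)) ^ 2).
  { intros n. unfold lambda, Lam. field. apply not_0_INR; lia. }
  rewrite !Heq.
  destruct (Nat.lt_total j k) as [h|[h|h]]; try lia.
  -
    assert (G := inv_sq_gap (INR (S j)) (INR (S k)) (INR K)).
    rewrite !S_INR in *. pose proof (pos_INR j).
    assert (INR j + 1 + 1 <= INR k + 1). { rewrite <- !S_INR. apply le_INR. lia. }
    assert (INR j + 1 <= INR K). { rewrite <- S_INR. apply le_INR. lia. }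
    specialize (G ltac:(lra) ltac:(lra) ltac:(lra)).
    rewrite Rabs_left1.
    + unfold Rdiv. replace (- (- Lam * / (INR j + 1) ^ 2 - - Lam * / (INR k + 1) ^ 2)) with (Lam * (/ (INR j + 1) ^ 2 - / (INR k + 1) ^ 2)) by ring.
      apply Rmult_le_compat_l; lra.
    + assert (0 <= / (INR j + 1) ^ 2 - / (INR k + 1) ^ 2). { pose proof (pos_INR K). assert (Hp : 0 < (INR K + 1)^3) by (apply pow_lt; lra). pose proof (Rinv_0_lt_compat _ Hp). lra. }
      nra.
  -
    assert (G := inv_sq_gap (INR (S k)) (INR (S j)) (INR K)).
    rewrite !S_INR in *. pose proof (pos_INR k).
    assert (INR k + 1 + 1 <= INR j + 1). { rewrite <- !S_INR. apply le_INR. lia. }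
    assert (INR k + 1 <= INR K). { rewrite <- S_INR. apply le_INR. lia. }
    specialize (G ltac:(lra) ltac:(lra) ltac:(lra)).
    rewrite Rabs_right.
    + unfold Rdiv. replace (- Lam * / (INR j + 1) ^ 2 - - Lam * / (INR k + 1) ^ 2) with (Lam * (/ (INR k + 1) ^ 2 - / (INR j + 1) ^ 2)) by ring.
      apply Rmult_le_compat_l; lra.
    + assert (0 <= / (INR k + 1) ^ 2 - / (INR j + 1) ^ 2). { pose proof (pos_INR K). assert (Hp : 0 < (INR K + 1)^3) by (apply pow_lt; lra). pose proof (Rinv_0_lt_compat _ Hp). lra. }
      apply Rle_ge. nra.
Qed.

Definition spikev (v : vec) (K0 K : nat) (al : R) : vec := fun n l j =>
  if Nat.leb n K0 then v n l j
  else if andb (andb (Nat.eqb l 0) (Nat.eqb j 0)) (Nat.leb n K) then RtoC (sqrt al) else 0%C.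

Lemma block_spike v K0 K al k : 0 <= al ->
  block (spikev v K0 K al) k = if Nat.ltb k K0 then block v k else if Nat.ltb k K then al else 0.
Proof.
  intros Ha. unfold block, spikev.
  destruct (Nat.leb_spec (S k) K0); destruct (Nat.ltb_spec k K0); try lia. reflexivity.
  destruct (Nat.leb_spec (S k) K); destruct (Nat.ltb_spec k K); try lia.
  - rewrite sum_first. rewrite sum_O. simpl. rewrite Cmod_R, Rabs_pos_eq by (apply sqrt_pos).
    rewrite Rmult_1_r. apply sqrt_sqrt; auto.
    intros l Hl. apply sum_zero. intros j. destruct (Nat.eqb_spec l 0); try lia. simpl. rewrite Cmod_0. ring.
  - apply sum_zero. intros l. apply sum_zero. intros j. rewrite Bool.andb_false_r. rewrite Cmod_0. ring.
Qed.

Lemma block_diff_spike_lo v K0 K al k : (k < K0)%nat -> block (diffv v (spikev v K0 K al)) k = 0.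
Proof.
  intros Hk. unfold block, diffv, spikev. destruct (Nat.leb_spec (S k) K0); try lia.
  apply sum_zero. intros l. apply sum_zero. intros j. unfold Cminus. rewrite Cplus_opp_r, Cmod_0. ring.
Qed.

Lemma inH_spike v K0 K al : inH v -> 0 <= al -> inH (spikev v K0 K al).
Proof.
  intros Hv Ha. pose proof Hv as [H0 Hex]. split.
  - intros n l j Hn. unfold spikev. destruct (Nat.leb_spec n K0); auto.
    destruct (Nat.eqb_spec l 0); destruct (Nat.eqb_spec j 0); destruct (Nat.leb_spec n K); simpl; auto.
    exfalso. apply Hn. subst. unfold valid_index. lia.
  - refine (proj1 (series_bound (block (spikev v K0 K al)) (Tot v + INR K * al) (fun k => block_ge0 _ k) _)).
    intros n. eapply Rle_trans with (sum_n (fun k => block v k + (if Nat.ltb k K then 1 else 0) * al) n).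
    + apply sumn_le. intros k. rewrite block_spike by auto.
      pose proof (block_ge0 v k). destruct (Nat.ltb k K0); destruct (Nat.ltb k K); lra.
    + rewrite sumn_plus, sumn_scal_r, count_lt.
      assert (sum_n (block v) n <= Tot v) by (apply sum_le_series; [apply block_ge0|auto]).
      assert (INR (Nat.min (S n) K) <= INR K) by (apply le_INR; lia).
      assert (INR (Nat.min (S n) K) * al <= INR K * al) by (apply Rmult_le_compat_r; auto).
      lra.
Qed.

Lemma dist_spike v K0 K al : inH v -> 0 <= al ->
  Series (block (diffv v (spikev v K0 K al))) <= 2 * tail v K0 + 2 * (INR K * al).
Proof.
  intros Hv Ha.
  refine (proj2 (series_bound (block (diffv v (spikev v K0 K al))) (2 * tail v K0 + 2 * (INR K * al)) (fun k => block_ge0 _ k) _)).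
  intros n. eapply Rle_trans with
    (sum_n (fun k => 2 * (if Nat.leb K0 k then block v k else 0) + 2 * ((if Nat.ltb k K then 1 else 0) * al)) n).
  - apply sumn_le. intros k. destruct (Nat.leb_spec K0 k).
    + eapply Rle_trans. apply block_ineq3. rewrite block_spike by auto.
      destruct (Nat.ltb_spec k K0); try lia. destruct (Nat.ltb k K); lra.
    + rewrite block_diff_spike_lo by lia. destruct (Nat.ltb k K); lra.
  - rewrite sumn_plus, !sumn_scal_l, sumn_scal_r, count_lt.
    assert (sum_n (fun k => if Nat.leb K0 k then block v k else 0) n <= tail v K0).
    { rewrite <- tail_series. apply sum_le_series. intros j; destruct Nat.leb; [apply block_ge0|lra].
      apply (series_le_gen _ (block v)). intros j; destruct Nat.leb; pose proof (block_ge0 v j); lra. apply Hv. }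
    assert (INR (Nat.min (S n) K) <= INR K) by (apply le_INR; lia).
    assert (INR (Nat.min (S n) K) * al <= INR K * al) by (apply Rmult_le_compat_r; auto).
    apply Rplus_le_compat; apply Rmult_le_compat_l; try lra. exact H.
Qed.

Lemma abs_prod_le x y z : Rabs x <= 1 -> Rabs y <= 1 -> - (x * y * z) <= Rabs z.
Proof.
  intros Hx Hy. pose proof (Rle_abs (- (x * y * z))). rewrite Rabs_Ropp, !Rabs_mult in H.
  pose proof (Rabs_pos x). pose proof (Rabs_pos y). pose proof (Rabs_pos z).
  assert (Rabs x * Rabs y <= 1) by nra. nra.
Qed.

Lemma V_dense kappa m : 0 < kappa -> denseH (Vset kappa m).
Proof.
  intros Hk v Hv del Hdel.
  destruct (tail_small v (del * del / 8) Hv ltac:(nra)) as [K0 HK0].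
  set (N := INR (S m)). assert (HN : 1 <= N) by apply INRS_ge1.
  set (t := / N). assert (Ht0 : 0 < t) by (apply Rinv_0_lt_compat; lra).
  assert (Ht1 : t <= 1). { unfold t. rewrite <- Rinv_1. apply Rinv_le_contravar; lra. }
  assert (HtN : t * N = 1) by (unfold t; field; lra).
  set (Lam := kappa ^ 2 / 4). assert (HLam : 0 < Lam) by (unfold Lam; nra).
  set (c := del * del / 16). assert (Hc : 0 < c) by (unfold c; nra).
  set (E := ln 2 + Rabs (ln c) + Rabs (ln Lam)).
  assert (HE : 0 <= E). { unfold E. pose proof (Rabs_pos (ln c)). pose proof (Rabs_pos (ln Lam)).
    assert (0 < ln 2) by (rewrite <- ln_1; apply ln_increasing; lra). lra. }
  destruct (INR_archimed 1 (2 * INR K0 + 1 + Lam * N + 1 + exp (N * N * E)) ltac:(lra)) as [K HK].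
  rewrite Rmult_1_r in HK.
  pose proof (pos_INR K0). pose proof (exp_pos (N * N * E)).
  assert (HLN : 0 <= Lam * N) by nra.
  assert (HK0K : (K0 < K)%nat). { apply INR_lt. lra. }
  set (X := INR K + 1). assert (HX : 1 < X) by (unfold X; lra).
  set (a := c / X). assert (Ha : 0 < a) by (unfold a; apply Rdiv_lt_0_compat; lra).
  set (al := 2 * a).
  set (eps := Lam / X ^ 3).
  set (w := spikev v K0 K al).
  exists w. split.
  2:{ unfold distH. apply sqrt_lt_sq; auto. apply series_ge0; intros; apply block_ge0.
      unfold w. eapply Rle_lt_trans. apply dist_spike; auto. unfold al; lra.
      assert (INR K * (2 * a) < 2 * c).
      { unfold a. unfold Rdiv. replace (INR K * (2 * (c * / X))) with (2 * c * (INR K / X)) by (unfold Rdiv; ring).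
        assert (INR K / X < 1). { apply Rmult_lt_reg_r with X. lra. unfold Rdiv. rewrite Rmult_assoc, Rinv_l by lra. unfold X; lra. }
        nra. }
      unfold al, c in *. lra. }
  split. apply inH_spike; auto. unfold al; lra.
  exists eps, K0, K, a.
  assert (HX3 : X <= X ^ 3) by nra.
  assert (Heps0 : 0 < eps) by (unfold eps; apply Rdiv_lt_0_compat; [lra| apply pow_lt; lra]).
  assert (HepsN : eps < t).
  { unfold eps, t. apply Rmult_lt_reg_r with (X ^ 3 * N). apply Rmult_lt_0_compat; [apply pow_lt|]; lra.
    unfold Rdiv. replace (Lam * / X ^ 3 * (X ^ 3 * N)) with (Lam * N) by (field; nra).
    replace (/ N * (X ^ 3 * N)) with (X ^ 3) by (field; lra). unfold X in *. lra. }
  split. split; auto. split. lra. split. auto. split. auto. split.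
  { intros k j Hkk Hj. unfold eps, X, Lam. apply gap_lemma; auto. }
  split.
  2:{ intros k Hk'. unfold w. rewrite block_spike by (unfold al; lra).
      destruct (Nat.ltb_spec k K0); try lia. destruct (Nat.ltb_spec k K); try lia. unfold al; lra. }
  intros q Hq. change (/ INR (S m)) with t in Hq |- *.
  set (Lk := ln X).
  assert (HLk : N * N * E <= Lk).
  { unfold Lk. rewrite <- (ln_exp (N * N * E)). apply ln_le. apply exp_pos. unfold X; lra. }
  assert (HLk0 : 0 <= Lk) by nra.
  assert (Hlneps : - ln eps = 3 * Lk - ln Lam).
  { unfold eps, Lk. unfold Rdiv.
    assert (HX3p : 0 < X ^ 3) by (apply pow_lt; lra).
    assert (HX3i : 0 < / X ^ 3) by (apply Rinv_0_lt_compat; auto).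
    rewrite (ln_mult Lam (/ X ^ 3)) by auto. rewrite (ln_Rinv (X ^ 3)) by auto.
    replace (X ^ 3) with (X * X * X) by ring.
    rewrite (ln_mult (X * X) X) by nra. rewrite (ln_mult X X) by lra. ring. }
  assert (Hlna : ln a = ln c - Lk).
  { unfold a, Lk, Rdiv.
    assert (0 < / X) by (apply Rinv_0_lt_compat; lra).
    rewrite (ln_mult c (/ X)) by auto. rewrite (ln_Rinv X) by lra. ring. }
  assert (HKK : ln (INR (K - K0)) >= Lk - ln 2).
  { rewrite minus_INR by lia.
    assert (X / 2 <= INR K - INR K0) by (unfold X; lra).
    assert (ln (X / 2) <= ln (INR K - INR K0)) by (apply ln_le; lra).
    unfold Rdiv in H2. rewrite (ln_mult X (/ 2)) in H2 by (try apply Rinv_0_lt_compat; lra).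
    rewrite (ln_Rinv 2) in H2 by lra. fold Lk in H2. lra. }
  rewrite Hlneps, Hlna.
  assert (F1 : (1 - q) * (/ 3 - t) * (3 * Lk - ln Lam) =
               (1 - q) * Lk - 3 * ((1 - q) * t * Lk) - (1 - q) * (/ 3 - t) * ln Lam) by field.
  assert (F2a : t * t * Lk >= E).
  { replace E with (t * t * (N * N * E)) by (replace (t * t * (N * N * E)) with ((t * N) * (t * N) * E) by ring; rewrite HtN; ring).
    apply Rle_ge. apply Rmult_le_compat_l; nra. }
  assert (F2 : (1 - q) * t * Lk >= t * t * Lk).
  { apply Rle_ge. apply Rmult_le_compat_r; auto. apply Rmult_le_compat_r; lra. }
  assert (F3 : - ((1 - q) * (/ 3 - t) * ln Lam) <= Rabs (ln Lam)).
  { apply abs_prod_le. rewrite Rabs_pos_eq by lra; lra. apply Rabs_le. lra. }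
  assert (F4 : - Rabs (ln c) <= q * ln c).
  { pose proof (Rle_abs (- ln c)) as Hc1. rewrite Rabs_Ropp in Hc1. destruct (Rle_dec 0 (ln c)).
    assert (0 <= q * ln c) by (apply Rmult_le_pos; lra). pose proof (Rabs_pos (ln c)). lra.
    assert (q * ln c >= ln c) by nra. lra. }
  assert (F5 : q * (ln c - Lk) = q * ln c - q * Lk) by ring.
  assert (F6 : (1 - q) * Lk = Lk - q * Lk) by ring.
  unfold E in F2a. assert (0 < ln 2) by (rewrite <- ln_1; apply ln_increasing; lra).
  pose proof (Rabs_pos (ln c)). pose proof (Rabs_pos (ln Lam)). lra.
Qed.

Definition Wset (kappa : R) (m : nat) : vec -> Prop :=
  if Nat.even m then Uset kappa (Nat.div2 m) else Vset kappa (Nat.div2 m).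

Definition RS (kappa : R) : vec -> Prop := fun v => inH v /\ forall m, Wset kappa m v.

Lemma RS_generic kappa : 0 < kappa -> genericH (RS kappa).
Proof.
  intros Hk. exists (Wset kappa). split.
  - intros k. unfold Wset. destruct (Nat.even k).
    split; [apply U_open | apply U_dense; auto].
    split; [apply V_open | apply V_dense; auto].
  - intros v. unfold RS. tauto.
Qed.

Lemma RS_U kappa v m : RS kappa v -> Uset kappa m v.
Proof. intros [_ H]. specialize (H (2 * m)%nat). unfold Wset in H. rewrite Nat.even_even, Nat.div2_double in H. auto. Qed.

Lemma RS_V kappa v m : RS kappa v -> Vset kappa m v.
Proof. intros [_ H]. specialize (H (2 * m + 1)%nat). unfold Wset in H. rewrite Nat.even_odd, Nat.div2_odd' in H. auto. Qed.

Lemma rbar_up (x : Rbar) a : (forall eta, 0 < eta -> Rbar_le x (Finite (a + eta))) -> Rbar_le x (Finite a).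
Proof.
  intros H. destruct x as [r| |]; simpl in *.
  - destruct (Rle_dec r a); auto. specialize (H ((r - a) / 2) ltac:(lra)). simpl in H. lra.
  - apply (H 1); lra.
  - auto.
Qed.

Lemma rbar_down (x : Rbar) a : (forall eta, 0 < eta -> Rbar_le (Finite (a - eta)) x) -> Rbar_le (Finite a) x.
Proof.
  intros H. destruct x as [r| |]; simpl in *.
  - destruct (Rle_dec a r); auto. specialize (H ((a - r) / 2) ltac:(lra)). simpl in H. lra.
  - auto.
  - apply (H 1); lra.
Qed.

Lemma glb_spec E : Rbar_is_glb E (Rbar_glb E).
Proof. exact (proj2_sig (Rbar_ex_glb E)). Qed.
Lemma lub_spec E : Rbar_is_lub E (Rbar_lub E).
Proof. exact (proj2_sig (Rbar_ex_lub E)). Qed.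

Lemma arch_m q eta : 0 < q < 1 -> 0 < eta -> exists m, / INR (S m) <= q <= 1 - / INR (S m) /\ / INR (S m) < eta.
Proof.
  intros Hq He.
  set (X := / q + / (1 - q) + / eta).
  assert (0 < / q) by (apply Rinv_0_lt_compat; lra).
  assert (0 < / (1 - q)) by (apply Rinv_0_lt_compat; lra).
  assert (0 < / eta) by (apply Rinv_0_lt_compat; lra).
  destruct (INR_archimed 1 X ltac:(lra)) as [m Hm]. rewrite Rmult_1_r in Hm. unfold X in Hm.
  exists m. rewrite S_INR. pose proof (pos_INR m).
  assert (HN : 0 < INR m + 1) by lra.
  assert (Hi : forall y, 0 < y -> / y < INR m + 1 -> / (INR m + 1) < y).
  { intros y Hy Hyl. rewrite <- (Rinv_inv y). apply Rinv_lt_contravar; auto. apply Rmult_lt_0_compat; auto. apply Rinv_0_lt_compat; auto. }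
  split; [split|].
  - left; apply Hi; lra.
  - assert (/ (INR m + 1) < 1 - q) by (apply Hi; lra). lra.
  - apply Hi; lra.
Qed.

Lemma small_eps C eta : 0 <= C -> 0 < eta -> exists del, 0 < del <= 1 /\
  forall eps, 0 < eps < del -> C / (- ln eps) <= eta.
Proof.
  intros HC He. exists (exp (- (C / eta) - 1)). split.
  split. apply exp_pos. apply Rle_trans with (exp 0); [|rewrite exp_0; lra]. apply exp_mono_le.
  assert (0 <= C / eta) by (apply Rdiv_le_0_compat; lra). lra.
  intros eps [He0 He1].
  assert (ln eps < - (C / eta) - 1).
  { rewrite <- (ln_exp (- (C / eta) - 1)). apply ln_increasing; auto. }
  assert (HCe : C / eta * eta = C) by (field; lra).
  apply div_le_aux. assert (0 <= C / eta) by (apply Rdiv_le_0_compat; lra). lra.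
  assert (0 <= C / eta) by (apply Rdiv_le_0_compat; lra).
  assert (eta * (C / eta + 1) <= eta * (- ln eps)) by (apply Rmult_le_compat_l; lra). nra.
Qed.

Theorem theorem1 (kappa : R) (hkappa : 0 < kappa) :
  exists Rset : vec -> Prop,
    genericH Rset /\
    forall psi, Rset psi ->
      forall q, 0 < q < 1 ->
        gfd_lower kappa psi q = Finite 0 /\ gfd_upper kappa psi q = Finite (1 / 3).
Proof.
  exists (RS kappa). split. apply RS_generic; auto.
  intros psi Hpsi q Hq.
  assert (Hin : inH psi) by apply Hpsi.
  assert (HT : 0 < Tot psi).
  { destruct (RS_V kappa psi 0 Hpsi) as [_ [eps [K1 [K [a [_ [_ [HKK [Ha [_ [_ Hb]]]]]]]]]]].
    specialize (Hb K1 ltac:(lia)). pose proof (block_le_Tot psi K1 Hin). lra. }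
  set (f := fun eps => ln (I_mu kappa psi q eps) / ((q - 1) * ln eps)).
  set (C := Cq kappa psi q).
  assert (HC : 0 <= C) by (apply Cq_ge0; lra).
  assert (Hbnd : forall eps, 0 < eps < 1 -> - C / (- ln eps) <= f eps <= / 3 + C / (- ln eps)).
  { intros eps He. unfold f, C. rewrite I_eq. apply dim_bounds; auto; lra. }
  assert (HU : forall eta del, 0 < eta -> 0 < del -> exists eps, 0 < eps < del /\ f eps <= eta).
  { intros eta del He Hd. destruct (arch_m q (Rmin eta del) Hq) as [m [Hm1 Hm2]]. apply Rmin_pos; auto.
    destruct (U_impl kappa m psi q hkappa (RS_U kappa psi m Hpsi) Hm1) as [eps [He1 He2]].
    exists eps. pose proof (Rmin_l eta del). pose proof (Rmin_r eta del). unfold fdim in He2.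
    split; [lra| unfold f; cbv beta; lra]. }
  assert (HV : forall eta del, 0 < eta -> 0 < del -> exists eps, 0 < eps < del /\ / 3 - eta <= f eps).
  { intros eta del He Hd. destruct (arch_m q (Rmin eta del) Hq) as [m [Hm1 Hm2]]. apply Rmin_pos; auto.
    destruct (V_impl kappa m psi q hkappa (RS_V kappa psi m Hpsi) Hm1) as [eps [He1 He2]].
    exists eps. pose proof (Rmin_l eta del). pose proof (Rmin_r eta del). unfold fdim in He2.
    split; [lra| unfold f; cbv beta; lra]. }
  assert (HS : forall eta, 0 < eta -> exists del, 0 < del <= 1 /\ forall eps, 0 < eps < del ->
             - eta <= f eps <= / 3 + eta).
  { intros eta He. destruct (small_eps C eta HC He) as [del [Hd Hd2]]. exists del. split; auto.
    intros eps Heps. specialize (Hd2 eps Heps). specialize (Hbnd eps ltac:(lra)).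
    unfold Rdiv in *. rewrite Ropp_mult_distr_l_reverse in Hbnd. lra. }
  unfold f in HU, HV, HS. cbv beta in HU, HV, HS. clear Hbnd.
  split.
  - unfold gfd_lower, liminf0.
    apply Rbar_is_lub_unique. split.
    + intros y [del [Hdel Hy]]. subst y. apply rbar_up. intros eta He.
      destruct (HU eta del He Hdel) as [eps [He1 He2]].
      eapply Rbar_le_trans. apply (proj1 (glb_spec _)). exists eps. split. exact He1. reflexivity.
      simpl. lra.
    + intros b Hb. apply rbar_down. intros eta He.
      destruct (HS eta He) as [del [Hd Hd2]].
      eapply Rbar_le_trans. 2: apply Hb. 2: exists del; split; [lra|reflexivity].
      apply (proj2 (glb_spec _)). intros z [eps [He1 Hz]]. subst z. simpl.
      specialize (Hd2 eps He1). lra.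
  - unfold gfd_upper, limsup0.
    replace (1 / 3) with (/ 3) by field.
    apply Rbar_is_glb_unique. split.
    + intros y [del [Hdel Hy]]. subst y. apply rbar_down. intros eta He.
      destruct (HV eta del He Hdel) as [eps [He1 He2]].
      eapply Rbar_le_trans. 2: apply (proj1 (lub_spec _)). 2: exists eps; split; [exact He1|reflexivity].
      simpl. lra.
    + intros b Hb. apply rbar_up. intros eta He.
      destruct (HS eta He) as [del [Hd Hd2]].
      eapply Rbar_le_trans. apply Hb. exists del; split; [lra|reflexivity].
      apply (proj2 (lub_spec _)). intros z [eps [He1 Hz]]. subst z. simpl.
      specialize (Hd2 eps He1). lra.
Qed.
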